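(* Fix integers $K\ge1$, $N\ge1$, $d\in[0,1]$, and an arbitrary distribution of the input $\mathbf X\in\{1,\dots,2K\}^N$ of the $2K$-ary i.i.d. deletion channel with deletion probability $d$. With the decomposition $(\mathbf X_1,\dots,\mathbf X_K,\mathbf F_x)$, $(\mathbf Y_1,\dots,\mathbf Y_K,\mathbf F_y)$ described in the context, for every $k\in\{1,\dots,K\}$, $$I(\mathbf X_1,\dots,\mathbf X_K,\mathbf F_x;\mathbf Y_k\mid \mathbf Y_1,\dots,\mathbf Y_{k-1})\le \mathbb E\{N_k\}\,C_2(d)+2\log(N+1),$$ where $C_2(d)$ is the capacity of the binary i.i.d. deletion channel with deletion probability $d$.
   Context: The $2K$-ary i.i.d. deletion channel with deletion probability $d$: an input $\mathbf X=(x_1,\dots,x_N)\in\{1,\dots,2K\}^N$ is sent; each symbol is independently (and independently of $\mathbf X$) deleted with probability $d$ or delivered unchanged with probability $1-d$; the output $\mathbf Y=(y_1,\dots,y_M)$ is the subsequence of surviving symbols in order. The binary i.i.d. deletion channel is the same with alphabet of size 2, and its capacity is $C_2(d)=\lim_{N\to\infty}\max_{P(\mathbf X)}\frac1N I(\mathbf X;\mathbf Y)$. Decomposition: for $k\in\{1,\dots,K\}$ the $k$-th subchannel carries the symbols $2k-1$ and $2k$. Let $\mathbf X_k$ be the subsequence of $\mathbf X$ consisting of the symbols lying in $\{2k-1,2k\}$ (a binary sequence), of length $N_k$, and $\mathbf Y_k$ the subsequence of $\mathbf Y$ consisting of the symbols lying in $\{2k-1,2k\}$, of length $M_k$; thus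 $\mathbf Y_k$ is the output of a binary i.i.d. deletion channel with deletion probability $d$ and input $\mathbf X_k$. Let $\mathbf F_x=(f_x[1],\dots,f_x[N])$ and $\mathbf F_y=(f_y[1],\dots,f_y[M])$ where $f_x[n]=\lceil x_n/2\rceil$ and $f_y[m]=\lceil y_m/2\rceil$ are the subchannel labels. Then $\mathbf X\leftrightarrow(\mathbf X_1,\dots,\mathbf X_K,\mathbf F_x)$ and $\mathbf Y\leftrightarrow(\mathbf Y_1,\dots,\mathbf Y_K,\mathbf F_y)$ are bijective correspondences. All logarithms are to a common base. *)

(* Defs.v *)
From Stdlib Require Import Reals List Arith.
Import ListNotations.
Open Scope R_scope.

Definition sumR {T} (l : list T) (f : T -> R) : R := fold_right Rplus 0 (map f l).

Fixpoint all_words {T} (A : list T) (n : nat) : list (list T) :=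
  match n with
  | O => [ [] ]
  | S n' => flat_map (fun a => map (cons a) (all_words A n')) A
  end.

Definition alphabet (K : nat) : list nat := seq 1 (2 * K).

Definition label (s : nat) : nat := ((s + 1) / 2)%nat.

(** Subsequence of the symbols of w lying in {2k-1, 2k}. *)
Definition sub (k : nat) (w : list nat) : list nat :=
  filter (fun s => Nat.eqb (label s) k) w.

(** Deletion pattern: [true] = deleted. Output = surviving symbols in order. *)
Definition delete (x : list nat) (m : list bool) : list nat :=
  map fst (filter (fun p => negb (snd p)) (combine x m)).

Definition is_input_dist (K N : nat) (P : list nat -> R) : Prop :=
  (forall x, 0 <= P x) /\ sumR (all_words (alphabet K) N) P = 1.

(** Underlying finite probability space: outcomes (x, deletion pattern). *)
Definition outcome := (list nat * list bool)%type.

Definition outcomes (K N : nat) : list outcome :=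
  flat_map (fun x => map (fun m => (x, m)) (all_words [false; true] N : list (list bool)))
           (all_words (alphabet K) N).

Definition pattern_prob (d : R) (m : list bool) : R :=
  fold_right Rmult 1 (map (fun b : bool => if b then d else 1 - d) m).

Definition weight (d : R) (P : list nat -> R) (o : outcome) : R :=
  P (fst o) * pattern_prob d (snd o).

Definition RV := outcome -> list (list nat).

Definition rv_eqb (u v : list (list nat)) : bool :=
  if list_eq_dec (list_eq_dec Nat.eq_dec) u v then true else false.

(** Probability that the joint of the variables fs takes its value at o. *)
Definition marg (Om : list outcome) (w : outcome -> R) (fs : list RV) (o : outcome) : R :=
  sumR Om (fun o' => if forallb (fun f => rv_eqb (f o') (f o)) fs then w o' else 0).

(** Conditional mutual information I(A;B|C) = E[ log p(A,B,C)p(C) / (p(A,C)p(B,C)) ]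
    (natural logarithm). *)
Definition cmi (Om : list outcome) (w : outcome -> R) (A B C : RV) : R :=
  sumR Om (fun o => w o *
    ln (marg Om w [A; B; C] o * marg Om w [C] o /
        (marg Om w [A; C] o * marg Om w [B; C] o))).

Definition const_rv : RV := fun _ => (@nil (list nat)).

Definition X_rv : RV := fun o => [fst o].
Definition Y_rv : RV := fun o => [delete (fst o) (snd o)].
(** (X_1, ..., X_K, F_x) *)
Definition Xdec_rv (K : nat) : RV :=
  fun o => map (fun j => sub j (fst o)) (seq 1 K) ++ [map label (fst o)].
Definition Yk_rv (k : nat) : RV := fun o => [sub k (delete (fst o) (snd o))].
Definition Yprefix_rv (k : nat) : RV :=
  fun o => map (fun j => sub j (delete (fst o) (snd o))) (seq 1 (k - 1)).

Definition expected_Nk (K N : nat) (d : R) (P : list nat -> R) (k : nat) : R :=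
  sumR (outcomes K N) (fun o => weight d P o * INR (length (sub k (fst o)))).

(** (1/n) max_{P(X)} I(X;Y) for the binary deletion channel (alphabet {1,2}, K = 1). *)
Definition binary_rate_set (d : R) (n : nat) : R -> Prop :=
  fun r => exists P, is_input_dist 1 n P /\
    r = cmi (outcomes 1 n) (weight d P) X_rv Y_rv const_rv / INR n.

Definition is_binary_capacity (d C : R) : Prop :=
  exists c : nat -> R,
    (forall n, (1 <= n)%nat -> is_lub (binary_rate_set d n) (c n)) /\
    Un_cv c C.

(* Main.v *)
Require Import Defs.
From Stdlib Require Import Reals List Arith Lra Lia Bool.
Import ListNotations.
Open Scope R_scope.

Lemma sumR_nil {T} (f : T -> R) : sumR [] f = 0.
Proof. reflexivity. Qed.
Lemma sumR_cons {T} (a : T) l f : sumR (a :: l) f = f a + sumR l f.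
Proof. reflexivity. Qed.
Lemma sumR_app {T} (l1 l2 : list T) f : sumR (l1 ++ l2) f = sumR l1 f + sumR l2 f.
Proof. induction l1; [simpl; rewrite sumR_nil; lra|]. simpl app. rewrite !sumR_cons, IHl1; lra. Qed.
Lemma sumR_ext {T} (l : list T) f g : (forall x, In x l -> f x = g x) -> sumR l f = sumR l g.
Proof. induction l; intros H; [reflexivity|]. rewrite !sumR_cons, H, IHl; auto; [intros; apply H|]; simpl; auto. Qed.
Lemma sumR_plus {T} (l : list T) f g : sumR l (fun x => f x + g x) = sumR l f + sumR l g.
Proof. induction l; [simpl; unfold sumR; simpl; lra|]. rewrite !sumR_cons, IHl; lra. Qed.
Lemma sumR_minus {T} (l : list T) f g : sumR l (fun x => f x - g x) = sumR l f - sumR l g.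
Proof. induction l; [simpl; unfold sumR; simpl; lra|]. rewrite !sumR_cons, IHl; lra. Qed.
Lemma sumR_scal {T} (l : list T) c f : sumR l (fun x => c * f x) = c * sumR l f.
Proof. induction l; [unfold sumR; simpl; lra|]. rewrite !sumR_cons, IHl; lra. Qed.
Lemma sumR_scal_r {T} (l : list T) c f : sumR l (fun x => f x * c) = sumR l f * c.
Proof. induction l; [unfold sumR; simpl; lra|]. rewrite !sumR_cons, IHl; lra. Qed.
Lemma sumR_zero {T} (l : list T) : sumR l (fun _ => 0) = 0.
Proof. induction l; [reflexivity|]. rewrite sumR_cons, IHl; lra. Qed.
Lemma sumR_le {T} (l : list T) f g : (forall x, In x l -> f x <= g x) -> sumR l f <= sumR l g.
Proof. induction l; intros H; [unfold sumR; simpl; lra|]. rewrite !sumR_cons.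
  assert (f a <= g a) by (apply H; simpl; auto).
  assert (sumR l f <= sumR l g) by (apply IHl; intros; apply H; simpl; auto). lra. Qed.
Lemma sumR_nonneg {T} (l : list T) f : (forall x, In x l -> 0 <= f x) -> 0 <= sumR l f.
Proof. intros H. rewrite <- (sumR_zero l). apply sumR_le; auto. Qed.
Lemma sumR_map {T U} (l : list T) (g : T -> U) f : sumR (map g l) f = sumR l (fun x => f (g x)).
Proof. induction l; [reflexivity|]. simpl map. rewrite !sumR_cons, IHl; reflexivity. Qed.
Lemma sumR_flat_map {T U} (l : list T) (g : T -> list U) f :
  sumR (flat_map g l) f = sumR l (fun x => sumR (g x) f).
Proof. induction l; [reflexivity|]. simpl flat_map. rewrite sumR_app, sumR_cons, IHl; reflexivity. Qed.
Lemma sumR_swap {T U} (l1 : list T) (l2 : list U) f :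
  sumR l1 (fun a => sumR l2 (fun b => f a b)) = sumR l2 (fun b => sumR l1 (fun a => f a b)).
Proof. induction l1; simpl.
  - rewrite sumR_nil. symmetry. apply sumR_zero.
  - rewrite sumR_cons, IHl1. rewrite <- sumR_plus. reflexivity. Qed.
Lemma sumR_indic {T} (dec : forall x y : T, {x = y} + {x <> y}) (l : list T) x f :
  NoDup l -> In x l -> sumR l (fun y => if dec y x then f y else 0) = f x.
Proof. induction l as [|a l IH]; intros Hn Hi; [destruct Hi|].
  inversion Hn; subst. rewrite sumR_cons. destruct (dec a x).
  - subst. rewrite (sumR_ext _ _ (fun _ => 0)). rewrite sumR_zero; lra.
    intros y Hy. destruct (dec y x); subst; tauto.
  - destruct Hi; [congruence|]. rewrite IH; auto; lra. Qed.
Lemma sumR_indic0 {T} (dec : forall x y : T, {x = y} + {x <> y}) (l : list T) x f :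
  ~ In x l -> sumR l (fun y => if dec y x then f y else 0) = 0.
Proof. intros H. rewrite (sumR_ext _ _ (fun _ => 0)). apply sumR_zero.
  intros y Hy. destruct (dec y x); subst; tauto. Qed.

Lemma ln_le_minus1 x : 0 < x -> ln x <= x - 1.
Proof. intros H. pose proof (exp_ineq1_le (ln x)). rewrite exp_ln in H0; lra. Qed.
Lemma ln_le' x y : 0 < x -> x <= y -> ln x <= ln y.
Proof. intros H1 H2. destruct (Req_dec x y); [subst; lra|].
  left; apply ln_increasing; lra. Qed.
Lemma div_self_le1 a : 0 <= a -> a / a <= 1.
Proof. intros H. destruct (Req_dec a 0). subst. unfold Rdiv; rewrite Rinv_0; lra.
  unfold Rdiv; rewrite Rinv_r; lra. Qed.

Definition ef (fs : list RV) (o' o : outcome) : bool :=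
  forallb (fun f => rv_eqb (f o') (f o)) fs.

Lemma rv_eqb_true u v : rv_eqb u v = true <-> u = v.
Proof. unfold rv_eqb. destruct list_eq_dec; split; congruence. Qed.
Lemma rv_eqb_refl u : rv_eqb u u = true.
Proof. apply rv_eqb_true; reflexivity. Qed.
Lemma rv_eqb_sym u v : rv_eqb u v = rv_eqb v u.
Proof. unfold rv_eqb. destruct list_eq_dec, list_eq_dec; congruence. Qed.
Lemma rv_eqb_trans u v x : rv_eqb u v = true -> rv_eqb v x = rv_eqb u x.
Proof. intros H. apply rv_eqb_true in H; subst; reflexivity. Qed.

Lemma ef_refl fs o : ef fs o o = true.
Proof. unfold ef. apply forallb_forall. intros; apply rv_eqb_refl. Qed.
Lemma ef_sym fs o o' : ef fs o' o = ef fs o o'.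
Proof. unfold ef. induction fs; simpl; auto. rewrite IHfs, rv_eqb_sym; auto. Qed.
Lemma ef_trans fs o1 o2 o3 : ef fs o1 o2 = true -> ef fs o2 o3 = ef fs o1 o3.
Proof. unfold ef. induction fs; simpl; auto. intros H. apply andb_prop in H as [H1 H2].
  rewrite IHfs by auto. rewrite (rv_eqb_trans _ _ _ H1). reflexivity. Qed.
Lemma ef_app a b o' o : ef (a ++ b) o' o = ef a o' o && ef b o' o.
Proof. unfold ef. apply forallb_app. Qed.
Lemma ef_cons g fs o' o : ef (g :: fs) o' o = rv_eqb (g o') (g o) && ef fs o' o.
Proof. reflexivity. Qed.
Lemma ef_nil o' o : ef [] o' o = true.
Proof. reflexivity. Qed.

Section Gen.
Variable Om : list outcome.
Variable w : outcome -> R.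
Hypothesis Hw : forall o, 0 <= w o.

Definition mg fs o := marg Om w fs o.
Lemma mg_def fs o : mg fs o = sumR Om (fun o' => if ef fs o' o then w o' else 0).
Proof. reflexivity. Qed.

Definition Lf fs := sumR Om (fun o => w o * ln (mg fs o)).

Lemma mg_nonneg fs o : 0 <= mg fs o.
Proof. rewrite mg_def. apply sumR_nonneg. intros; destruct ef; auto; lra. Qed.

Lemma mg_ge_w fs o : In o Om -> w o <= mg fs o.
Proof. rewrite mg_def. generalize Om. intros l Hi. induction l; [destruct Hi|].
  rewrite sumR_cons. destruct Hi as [->|Hi].
  - rewrite ef_refl. assert (0 <= sumR l (fun o' => if ef fs o' o then w o' else 0)).
    apply sumR_nonneg; intros; destruct ef; auto; lra. lra.
  - specialize (IHl Hi). assert (0 <= if ef fs a o then w a else 0) by (destruct ef; auto; lra). lra. Qed.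

Lemma mg_pos fs o : In o Om -> 0 < w o -> 0 < mg fs o.
Proof. intros. pose proof (mg_ge_w fs o H). lra. Qed.

Lemma ef_trans2 fs q o1 o2 : ef fs o1 o2 = true -> ef fs q o1 = ef fs q o2.
Proof. intros H. rewrite ef_sym in H. rewrite (ef_sym fs o1 q), (ef_sym fs o2 q).
  apply (ef_trans fs o2 o1 q) in H. auto. Qed.

Lemma mg_rel fs o' o : ef fs o' o = true -> mg fs o' = mg fs o.
Proof. intros H. rewrite !mg_def. apply sumR_ext. intros q _.
  rewrite (ef_trans2 fs q o' o H). reflexivity. Qed.

Lemma mg_ext fs gs o : (forall o', In o' Om -> ef fs o' o = ef gs o' o) -> mg fs o = mg gs o.
Proof. intros H. rewrite !mg_def. apply sumR_ext. intros; rewrite H; auto. Qed.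

Lemma mg_mono fs gs o : (forall o', In o' Om -> ef fs o' o = true -> ef gs o' o = true) ->
  mg fs o <= mg gs o.
Proof. intros H. rewrite !mg_def. apply sumR_le. intros x Hx.
  destruct (ef fs x o) eqn:E. rewrite H; auto; lra. destruct (ef gs x o); [apply Hw|lra]. Qed.

Lemma Lf_ext fs gs : (forall o o', In o Om -> In o' Om -> ef fs o' o = ef gs o' o) -> Lf fs = Lf gs.
Proof. intros H. unfold Lf. apply sumR_ext. intros o Ho. rewrite (mg_ext fs gs); auto. Qed.

Lemma Lf_mono fs gs : (forall o o', In o Om -> In o' Om -> ef fs o' o = true -> ef gs o' o = true) ->
  Lf fs <= Lf gs.
Proof. intros H. unfold Lf. apply sumR_le. intros o Ho.
  destruct (Hw o) as [Hp|H0]. apply Rmult_le_compat_l; [lra|]. apply ln_le'.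
  apply mg_pos; auto. apply mg_mono; auto. rewrite <- H0, !Rmult_0_l; lra. Qed.

Lemma sum4 a b c d : sumR Om (fun o => w o * ln (mg a o * mg b o / (mg c o * mg d o)))
  = Lf a + Lf b - Lf c - Lf d.
Proof. unfold Lf. rewrite <- sumR_plus, <- !sumR_minus. apply sumR_ext. intros o Ho.
  destruct (Hw o) as [Hp|H0]; [|rewrite <- H0; ring].
  pose proof (mg_pos a o Ho Hp). pose proof (mg_pos b o Ho Hp).
  pose proof (mg_pos c o Ho Hp). pose proof (mg_pos d o Ho Hp).
  unfold Rdiv. rewrite ln_mult, ln_mult, ln_Rinv, ln_mult; try lra.
  all: try apply Rinv_0_lt_compat; try apply Rmult_lt_0_compat; auto. Qed.

Lemma cmi_L A B C : cmi Om w A B C = Lf [A;B;C] + Lf [C] - Lf [A;C] - Lf [B;C].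
Proof. rewrite <- sum4. reflexivity. Qed.

Lemma mg_nil o : mg [] o = sumR Om w.
Proof. rewrite mg_def. apply sumR_ext. reflexivity. Qed.

Lemma Lf_nil : sumR Om w = 1 -> Lf [] = 0.
Proof. intros H. unfold Lf. rewrite (sumR_ext _ _ (fun _ => 0)). apply sumR_zero.
  intros. rewrite mg_nil, H, ln_1; ring. Qed.

Lemma class_sum fs phi :
  sumR Om (fun o => w o * phi o) =
  sumR Om (fun o => w o * (sumR Om (fun o' => if ef fs o' o then w o' * phi o' else 0) / mg fs o)).
Proof.
  symmetry.
  transitivity (sumR Om (fun o => sumR Om (fun o' => if ef fs o' o then w o * w o' * phi o' / mg fs o' else 0))).
  { apply sumR_ext. intros o Ho. unfold Rdiv. rewrite <- sumR_scal_r, <- sumR_scal. apply sumR_ext. intros o' Ho'. destruct (ef fs o' o) eqn:E; [|ring].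
    rewrite (mg_rel fs o' o E). ring. }
  rewrite sumR_swap. apply sumR_ext. intros o' Ho'.
  transitivity (w o' * phi o' * (sumR Om (fun o => if ef fs o o' then w o else 0) / mg fs o')).
  { unfold Rdiv. rewrite <- sumR_scal_r, <- sumR_scal. apply sumR_ext. intros o Ho.
    rewrite ef_sym. destruct ef; ring. }
  rewrite <- mg_def. destruct (Hw o') as [Hp|H0].
  - pose proof (mg_pos fs o' Ho' Hp). field. lra.
  - rewrite <- H0. ring. Qed.

Lemma wsum_le1 (r : outcome -> R) : (forall o, In o Om -> 0 < w o -> r o <= 1) ->
  sumR Om (fun o => w o * r o) <= sumR Om w.
Proof. intros H. apply sumR_le. intros o Ho. destruct (Hw o) as [Hp|H0].
  specialize (H o Ho Hp). nra. rewrite <- H0; lra. Qed.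

Lemma Gibbs_sum (r : outcome -> R) :
  (forall o, In o Om -> 0 < w o -> 0 < r o) ->
  sumR Om (fun o => w o * ln (r o)) <= sumR Om (fun o => w o * r o) - sumR Om w.
Proof. intros H. rewrite <- sumR_minus. apply sumR_le. intros o Ho.
  destruct (Hw o) as [Hp|H0]; [|rewrite <- H0; lra].
  pose proof (ln_le_minus1 (r o) (H o Ho Hp)). nra. Qed.

End Gen.

Lemma ef_abc a b c o' o : ef (a++b++c) o' o = ef (a++c) o' o && ef (b++c) o' o.
Proof. rewrite !ef_app. destruct (ef a o' o), (ef b o' o), (ef c o' o); reflexivity. Qed.

Lemma div_mul_le x y : 0 <= x -> 0 <= y -> x * (y / y) <= x.
Proof. intros. pose proof (div_self_le1 y H0). assert (0 <= y / y).
  destruct (Req_dec y 0). subst; unfold Rdiv; rewrite Rinv_0; lra.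
  unfold Rdiv; rewrite Rinv_r; lra. nra. Qed.

Lemma div_le_1 x y : 0 <= x -> x <= y -> x / y <= 1.
Proof. intros. destruct (Req_dec y 0). subst; unfold Rdiv; rewrite Rinv_0; lra.
  apply Rmult_le_reg_r with y. lra. unfold Rdiv. rewrite Rmult_assoc, Rinv_l; lra. Qed.

Lemma div_nonneg x y : 0 <= x -> 0 <= y -> 0 <= x / y.
Proof. intros. destruct (Req_dec y 0). subst; unfold Rdiv; rewrite Rinv_0; lra.
  unfold Rdiv. apply Rmult_le_pos; auto. left; apply Rinv_0_lt_compat; lra. Qed.

Lemma mul_div_cancel x y : x <> 0 -> x * y / x = y.
Proof. intros; field; auto. Qed.

Section Gibbs.
Variable Om : list outcome.
Variable w : outcome -> R.
Hypothesis Hw : forall o, 0 <= w o.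

Notation mg := (mg Om w).
Notation Lf := (Lf Om w).

Lemma key_Z a b c o :
  sumR Om (fun o' => w o' * (if ef (a++c) o' o then mg (b++c) o' / mg (a++b++c) o' else 0))
  <= mg c o.
Proof.
  rewrite (class_sum Om w Hw (b++c)).
  rewrite (mg_def _ _ c). apply sumR_le. intros o' Ho'.
  set (M := sumR Om (fun q => if ef (a++c) q o && ef (b++c) q o' then w q else 0)).
  assert (HM : 0 <= M). { apply sumR_nonneg; intros; destruct (_ && _); auto; lra. }
  assert (HY : sumR Om (fun o'' => if ef (b ++ c) o'' o' then w o'' *
            (if ef (a ++ c) o'' o then mg (b ++ c) o'' / mg (a ++ b ++ c) o'' else 0) else 0)
            = mg (b++c) o' * (M / M)).
  { transitivity (sumR Om (fun q => (if ef (a++c) q o && ef (b++c) q o' then w q else 0) * (mg (b++c) o' / M))).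
    2: { rewrite sumR_scal_r. fold M. unfold Rdiv; ring. }
    apply sumR_ext. intros q Hq.
    destruct (ef (b++c) q o') eqn:E1; destruct (ef (a++c) q o) eqn:E2; simpl; try ring.
    rewrite (mg_rel _ _ _ _ _ E1).
    assert (mg (a++b++c) q = M).
    { rewrite mg_def. unfold M. apply sumR_ext. intros q' _. rewrite ef_abc.
      rewrite (ef_trans2 _ _ _ _ E1), (ef_trans2 _ _ _ _ E2). rewrite andb_comm. reflexivity. }
    rewrite H. ring. }
  rewrite HY.
  destruct (ef c o' o) eqn:EC; cbv iota.
  - pose proof (mg_nonneg Om w Hw (b++c) o'). destruct (Req_dec (mg (b++c) o') 0).
    + rewrite H0. unfold Rdiv; rewrite Rinv_0. rewrite !Rmult_0_r. pose proof (Hw o'). lra.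
    + assert (mg (b ++ c) o' * (M / M) / mg (b ++ c) o' = M / M) by (apply mul_div_cancel; exact H0).
      rewrite H1. pose proof (div_self_le1 M HM). pose proof (div_nonneg M M HM HM).
      pose proof (Hw o'). nra.
  - assert (M = 0).
    { unfold M. rewrite (sumR_ext _ _ (fun _ => 0)). apply sumR_zero. intros q _.
      destruct (ef (a++c) q o) eqn:E2; destruct (ef (b++c) q o') eqn:E1; simpl; auto.
      exfalso. rewrite ef_app in E1, E2. apply andb_prop in E1 as [_ E1]. apply andb_prop in E2 as [_ E2].
      rewrite ef_sym in E1. rewrite (ef_trans _ _ _ _ E1) in E2. congruence. }
    rewrite H. unfold Rdiv. rewrite Rinv_0. rewrite !Rmult_0_r, Rmult_0_l. lra.
Qed.

Lemma key_sum a b c :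
  sumR Om (fun o => w o * (mg (a++c) o * mg (b++c) o / (mg (a++b++c) o * mg c o))) <= sumR Om w.
Proof.
  rewrite (class_sum Om w Hw (a++c)). apply (wsum_le1 Om w Hw). intros o Ho Hp.
  apply div_le_1. apply sumR_nonneg; intros; destruct ef; [|lra].
  apply Rmult_le_pos; auto. apply div_nonneg. apply Rmult_le_pos; apply mg_nonneg; auto.
  apply Rmult_le_pos; apply mg_nonneg; auto.
  assert (E : sumR Om (fun o' => if ef (a ++ c) o' o then w o' *
        (mg (a ++ c) o' * mg (b ++ c) o' / (mg (a ++ b ++ c) o' * mg c o')) else 0) =
        mg (a++c) o / mg c o * sumR Om (fun o' => w o' * (if ef (a++c) o' o then mg (b++c) o' / mg (a++b++c) o' else 0))).
  { rewrite <- sumR_scal. apply sumR_ext. intros o' _. destruct (ef (a++c) o' o) eqn:E; [|ring].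
    rewrite (mg_rel _ _ _ _ _ E). assert (ef c o' o = true) by (rewrite ef_app in E; apply andb_prop in E; tauto).
    rewrite (mg_rel _ _ _ _ _ H). unfold Rdiv. rewrite Rinv_mult. ring. }
  rewrite E. pose proof (key_Z a b c o). pose proof (mg_pos Om w Hw c o Ho Hp).
  pose proof (mg_nonneg Om w Hw (a++c) o).
  unfold Rdiv. rewrite Rmult_assoc. 
  assert (0 <= / mg c o * sumR Om (fun o' => w o' * (if ef (a ++ c) o' o then mg (b ++ c) o' * / mg (a ++ b ++ c) o' else 0)) <= 1).
  { split. apply Rmult_le_pos. left; apply Rinv_0_lt_compat; auto. apply sumR_nonneg; intros.
    apply Rmult_le_pos; auto. destruct ef; [|lra]. apply (div_nonneg); apply mg_nonneg; auto.
    apply Rmult_le_reg_l with (mg c o); auto. rewrite <- Rmult_assoc, Rinv_r by lra. lra. }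
  nra.
Qed.

Lemma GI1 a b c : Lf (a++c) + Lf (b++c) <= Lf (a++b++c) + Lf c.
Proof.
  assert (H := sum4 Om w Hw (a++c) (b++c) (a++b++c) c).
  assert (Hg := Gibbs_sum Om w Hw (fun o => mg (a++c) o * mg (b++c) o / (mg (a++b++c) o * mg c o))).
  assert (Hk := key_sum a b c).
  assert (sumR Om (fun o => w o * ln (mg (a ++ c) o * mg (b ++ c) o / (mg (a ++ b ++ c) o * mg c o))) <= 0).
  { eapply Rle_trans. apply Hg. intros o Ho Hp.
    unfold Rdiv. apply Rmult_lt_0_compat. apply Rmult_lt_0_compat; apply mg_pos; auto.
    apply Rinv_0_lt_compat, Rmult_lt_0_compat; apply mg_pos; auto. lra. }
  lra.
Qed.

Lemma sumR_const1 {T} (l : list T) : sumR l (fun _ => 1) = INR (length l).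
Proof. induction l; [reflexivity|]. rewrite sumR_cons, IHl. simpl length. rewrite S_INR. lra. Qed.

Lemma count_ge1 (vals : list (list (list nat))) x : In x vals ->
  1 <= sumR vals (fun v => if rv_eqb x v then 1 else 0).
Proof. induction vals; intros H; [destruct H|]. rewrite sumR_cons. destruct H as [->|H].
  rewrite rv_eqb_refl. assert (0 <= sumR vals (fun v => if rv_eqb x v then 1 else 0))
  by (apply sumR_nonneg; intros; destruct rv_eqb; lra). lra.
  specialize (IHvals H). destruct rv_eqb; lra. Qed.

Lemma GI2 (g : RV) fs (vals : list (list (list nat))) :
  sumR Om w = 1 -> (forall o, In o Om -> In (g o) vals) ->
  Lf fs - Lf (g :: fs) <= ln (INR (length vals)).
Proof.
  intros Hs Hv.
  destruct vals as [|v0 vs].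
  { destruct Om as [|o0 l]. unfold sumR in Hs; simpl in Hs; lra. specialize (Hv o0 (or_introl eq_refl)). destruct Hv. }
  set (s := INR (length (v0 :: vs))).
  assert (Hs0 : 0 < s). { unfold s. simpl length. rewrite S_INR. pose proof (pos_INR (length vs)). lra. }
  set (r := fun o => mg fs o / (s * mg (g::fs) o)).
  assert (E : Lf fs - Lf (g :: fs) - ln s = sumR Om (fun o => w o * ln (r o))).
  { unfold Lf. replace (ln s) with (sumR Om (fun o => w o * ln s)) by (rewrite sumR_scal_r, Hs; ring).
    rewrite <- !sumR_minus. apply sumR_ext. intros o Ho. destruct (Hw o) as [Hp|H0]; [|rewrite <- H0; ring].
    pose proof (mg_pos Om w Hw fs o Ho Hp). pose proof (mg_pos Om w Hw (g::fs) o Ho Hp).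
    unfold r. unfold Rdiv. rewrite ln_mult, ln_Rinv, ln_mult; try lra; try nra.
    apply Rinv_0_lt_compat; nra. }
  assert (Hg := Gibbs_sum Om w Hw r).
  assert (Hk : sumR Om (fun o => w o * (mg fs o / mg (g::fs) o)) <= s).
  { eapply Rle_trans with (sumR Om (fun o => w o * sumR (v0::vs) (fun v => if rv_eqb (g o) v then mg fs o / mg (g::fs) o else 0))).
    { apply sumR_le. intros o Ho. apply Rmult_le_compat_l; auto.
      rewrite (sumR_ext _ _ (fun v => (mg fs o / mg (g::fs) o) * (if rv_eqb (g o) v then 1 else 0))).
      rewrite sumR_scal. pose proof (count_ge1 _ _ (Hv o Ho)).
      assert (0 <= mg fs o / mg (g :: fs) o) by (apply div_nonneg; apply mg_nonneg; auto). nra.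
      intros; destruct rv_eqb; ring. }
    rewrite (sumR_ext _ _ (fun o => sumR (v0::vs) (fun v => w o * (if rv_eqb (g o) v then mg fs o / mg (g :: fs) o else 0)))).
    2: { intros; rewrite sumR_scal; reflexivity. }
    rewrite sumR_swap. unfold s. rewrite <- sumR_const1. apply sumR_le. intros v _.
    rewrite <- Hs. rewrite (class_sum Om w Hw fs). apply (wsum_le1 Om w Hw). intros o Ho Hp.
    set (M := sumR Om (fun q => if rv_eqb (g q) v && ef fs q o then w q else 0)).
    assert (HM : 0 <= M) by (apply sumR_nonneg; intros; destruct (_ && _); auto; lra).
    assert (HY : sumR Om (fun o' => if ef fs o' o then w o' * (if rv_eqb (g o') v then mg fs o' / mg (g :: fs) o' else 0) else 0)
      = mg fs o * (M / M)).
    { transitivity (sumR Om (fun q => (if rv_eqb (g q) v && ef fs q o then w q else 0) * (mg fs o / M))).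
      2: { rewrite sumR_scal_r. fold M. unfold Rdiv; ring. }
      apply sumR_ext. intros q Hq. destruct (ef fs q o) eqn:E1; destruct (rv_eqb (g q) v) eqn:E2; simpl; try ring.
      rewrite (mg_rel _ _ _ _ _ E1).
      assert (mg (g::fs) q = M).
      { rewrite mg_def. unfold M. apply sumR_ext. intros q' _. rewrite ef_cons.
        rewrite (ef_trans2 _ _ _ _ E1). apply rv_eqb_true in E2. rewrite E2. reflexivity. }
      rewrite H. ring. }
    rewrite HY. apply div_le_1. apply Rmult_le_pos; [apply mg_nonneg; auto|]. apply div_nonneg; auto.
    apply div_mul_le; auto. apply mg_nonneg; auto. }
  assert (sumR Om (fun o => w o * r o) <= 1).
  { unfold r. rewrite (sumR_ext _ _ (fun o => / s * (w o * (mg fs o / mg (g :: fs) o)))).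
    rewrite sumR_scal. apply Rmult_le_reg_l with s; auto. rewrite <- Rmult_assoc, Rinv_r; lra.
    intros. unfold Rdiv. rewrite Rinv_mult. ring. }
  assert (sumR Om (fun o => w o * ln (r o)) <= 0).
  { eapply Rle_trans. apply Hg. intros o Ho Hp. unfold r. apply Rdiv_lt_0_compat.
    apply mg_pos; auto. apply Rmult_lt_0_compat; auto. apply mg_pos; auto. lra. }
  fold s. lra.
Qed.

End Gibbs.

Definition pat (n : nat) : list (list bool) := all_words [false; true] n.

Lemma In_all_words {T} (A : list T) n x : In x (all_words A n) <-> length x = n /\ (forall a, In a x -> In a A).
Proof. revert x; induction n; intros x; simpl.
  - split. intros [<-|[]]; simpl; split; auto; intros _ []. intros [H _]; destruct x; simpl in *; auto; discriminate.
  - rewrite in_flat_map. split.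
    + intros [a [Ha Hx]]. apply in_map_iff in Hx as [y [<- Hy]]. apply IHn in Hy as [H1 H2].
      simpl; split; [congruence|]. intros b [<-|Hb]; auto.
    + intros [H1 H2]. destruct x as [|a y]; [discriminate|]. exists a. split; [apply H2; simpl; auto|].
      apply in_map. apply IHn. simpl in H1; split; [lia|]. intros; apply H2; simpl; auto.
Qed.

Lemma NoDup_fm {T} (A : list T) (W : list (list T)) : NoDup A -> NoDup W ->
  NoDup (flat_map (fun a => map (cons a) W) A).
Proof. intros HA HW. induction HA as [|a A Hna HA IH]; simpl. constructor.
  apply NoDup_app.
  - apply NoDup_map_NoDup_ForallPairs; auto. intros x y _ _ H; injection H; auto.
  - apply IH.
  - intros x Hx1 Hx2. apply in_map_iff in Hx1 as [y [<- _]]. apply in_flat_map in Hx2 as [b [Hb Hy]].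
    apply in_map_iff in Hy as [z [Hz _]]. injection Hz; intros; subst. contradiction.
Qed.

Lemma NoDup_all_words {T} (A : list T) n : NoDup A -> NoDup (all_words A n).
Proof. intros HA. induction n; simpl. constructor; [intros []|constructor]. apply NoDup_fm; auto. Qed.

Lemma sum_pat_S n (F : list bool -> R) :
  sumR (pat (S n)) F = sumR (pat n) (fun m => F (false :: m)) + sumR (pat n) (fun m => F (true :: m)).
Proof. unfold pat. change (all_words [false; true] (S n)) with (flat_map (fun a => map (cons a) (all_words [false;true] n)) [false;true]).
  rewrite sumR_flat_map, !sumR_cons, sumR_nil, !sumR_map. ring. Qed.

Lemma pat_0 (F : list bool -> R) : sumR (pat 0) F = F [].
Proof. unfold pat; simpl. rewrite sumR_cons, sumR_nil; ring. Qed.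

Lemma pp_cons d b m : pattern_prob d (b :: m) = (if b then d else 1 - d) * pattern_prob d m.
Proof. reflexivity. Qed.

Lemma pp_app d m1 m2 : pattern_prob d (m1 ++ m2) = pattern_prob d m1 * pattern_prob d m2.
Proof. induction m1; simpl app; [unfold pattern_prob; simpl; ring|]. rewrite !pp_cons, IHm1; ring. Qed.

Lemma pp_nonneg d m : 0 <= d <= 1 -> 0 <= pattern_prob d m.
Proof. intros Hd. induction m; [unfold pattern_prob; simpl; lra|]. rewrite pp_cons.
  apply Rmult_le_pos; auto. destruct a; lra. Qed.

Lemma pp_sum1 d n : sumR (pat n) (pattern_prob d) = 1.
Proof. induction n. rewrite pat_0; reflexivity. rewrite sum_pat_S.
  rewrite (sumR_ext _ _ (fun m => (1 - d) * pattern_prob d m)) by (intros; reflexivity).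
  rewrite (sumR_ext _ (fun m => pattern_prob d (true :: m)) (fun m => d * pattern_prob d m)) by (intros; reflexivity).
  rewrite !sumR_scal, IHn. ring. Qed.

Lemma sum_outcomes K N (F : outcome -> R) :
  sumR (outcomes K N) F = sumR (all_words (alphabet K) N) (fun x => sumR (pat N) (fun m => F (x, m))).
Proof. unfold outcomes. rewrite sumR_flat_map. apply sumR_ext. intros. rewrite sumR_map. reflexivity. Qed.

Lemma words_concat {T} (A : list T) a b (f : list T -> R) :
  sumR (all_words A (a + b)) f = sumR (all_words A a) (fun x1 => sumR (all_words A b) (fun x2 => f (x1 ++ x2))).
Proof. revert f. induction a; intros f.
  - simpl. rewrite sumR_cons, sumR_nil. ring_simplify. reflexivity.
  - change (all_words A (S a + b)) with (flat_map (fun c => map (cons c) (all_words A (a+b))) A).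
    change (all_words A (S a)) with (flat_map (fun c => map (cons c) (all_words A a)) A).
    rewrite !sumR_flat_map. apply sumR_ext. intros c _. rewrite !sumR_map.
    rewrite (IHa (fun x => f (c :: x))). reflexivity. Qed.

Lemma delete_cons c x b m : delete (c :: x) (b :: m) = if b then delete x m else c :: delete x m.
Proof. unfold delete. simpl. destruct b; reflexivity. Qed.
Lemma delete_nil m : delete [] m = [].
Proof. reflexivity. Qed.

Lemma delete_app x1 x2 m1 m2 : length x1 = length m1 ->
  delete (x1 ++ x2) (m1 ++ m2) = delete x1 m1 ++ delete x2 m2.
Proof. revert m1; induction x1; intros [|b m1] H; simpl in H; try discriminate; auto.
  simpl app. rewrite !delete_cons. injection H; intros. destruct b; rewrite IHx1; auto. Qed.

Lemma delete_map (f : nat -> nat) x m : delete (map f x) m = map f (delete x m).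
Proof. revert m; induction x; intros [|b m]; auto. simpl map. rewrite !delete_cons. destruct b; simpl; rewrite IHx; auto. Qed.

Definition subpat (k : nat) (x : list nat) (m : list bool) : list bool :=
  map snd (filter (fun p => Nat.eqb (label (fst p)) k) (combine x m)).

Lemma subpat_cons k c x b m : subpat k (c :: x) (b :: m) = if Nat.eqb (label c) k then b :: subpat k x m else subpat k x m.
Proof. unfold subpat. simpl. destruct (Nat.eqb (label c) k); reflexivity. Qed.

Lemma sub_cons k c x : sub k (c :: x) = if Nat.eqb (label c) k then c :: sub k x else sub k x.
Proof. reflexivity. Qed.

Lemma sub_delete k x m : length x = length m -> sub k (delete x m) = delete (sub k x) (subpat k x m).
Proof. revert m; induction x; intros [|b m] H; simpl in H; try discriminate; auto.
  injection H; intro H'. rewrite (delete_cons a x b m), (subpat_cons k a x b m), (sub_cons k a x).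
  destruct b, (Nat.eqb (label a) k) eqn:E; rewrite ?delete_cons, ?sub_cons, ?E, ?IHx; auto. Qed.

Lemma ML d k x (F : list bool -> R) :
  sumR (pat (length x)) (fun m => pattern_prob d m * F (subpat k x m)) =
  sumR (pat (length (sub k x))) (fun m => pattern_prob d m * F m).
Proof. revert F; induction x as [|c x IH]; intros F.
  - simpl. rewrite !pat_0. reflexivity.
  - change (length (c :: x)) with (S (length x)). rewrite sum_pat_S. rewrite sub_cons.
    destruct (Nat.eqb (label c) k) eqn:E.
    + change (length (c :: sub k x)) with (S (length (sub k x))). rewrite sum_pat_S.
      rewrite (sumR_ext _ _ (fun m => (1 - d) * (pattern_prob d m * F (false :: subpat k x m)))).
      2: { intros; rewrite subpat_cons, E, pp_cons; ring. }
      rewrite (sumR_ext _ (fun m => pattern_prob d (true :: m) * F (subpat k (c :: x) (true :: m))) (fun m => d * (pattern_prob d m * F (true :: subpat k x m)))).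
      2: { intros; rewrite subpat_cons, E, pp_cons; ring. }
      rewrite !sumR_scal. rewrite (IH (fun m => F (false :: m))), (IH (fun m => F (true :: m))).
      rewrite (sumR_ext _ (fun m => pattern_prob d (false :: m) * F (false :: m)) (fun m => (1 - d) * (pattern_prob d m * F (false :: m)))) by (intros; rewrite pp_cons; ring).
      rewrite (sumR_ext _ (fun m => pattern_prob d (true :: m) * F (true :: m)) (fun m => d * (pattern_prob d m * F (true :: m)))) by (intros; rewrite pp_cons; ring).
      rewrite !sumR_scal. reflexivity.
    + rewrite (sumR_ext _ _ (fun m => (1 - d) * (pattern_prob d m * F (subpat k x m)))).
      2: { intros; rewrite subpat_cons, E, pp_cons; ring. }
      rewrite (sumR_ext _ (fun m => pattern_prob d (true :: m) * F (subpat k (c :: x) (true :: m))) (fun m => d * (pattern_prob d m * F (subpat k x m)))).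
      2: { intros; rewrite subpat_cons, E, pp_cons; ring. }
      rewrite !sumR_scal, IH. ring.
Qed.

Definition rest (k : nat) (l : list nat) : list nat := filter (fun s => negb (Nat.eqb (label s) k)) l.

Definition Sp d n (H : list bool -> R) := sumR (pat n) (fun m => pattern_prob d m * H m).

Lemma Sp_S d n H : Sp d (S n) H = (1 - d) * Sp d n (fun m => H (false :: m)) + d * Sp d n (fun m => H (true :: m)).
Proof. unfold Sp. rewrite sum_pat_S, <- !sumR_scal. f_equal; apply sumR_ext; intros; rewrite pp_cons; ring. Qed.
Lemma Sp_0 d H : Sp d 0 H = H [].
Proof. unfold Sp. rewrite pat_0. unfold pattern_prob; simpl; ring. Qed.
Lemma Sp_ext d n H1 H2 : (forall m, H1 m = H2 m) -> Sp d n H1 = Sp d n H2.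
Proof. intros E; unfold Sp; apply sumR_ext; intros; rewrite E; auto. Qed.

Lemma rest_cons k c l : rest k (c :: l) = if Nat.eqb (label c) k then rest k l else c :: rest k l.
Proof. unfold rest; simpl. destruct (Nat.eqb (label c) k); reflexivity. Qed.

Lemma IND d k x (F G : list nat -> R) :
  Sp d (length x) (fun m => F (rest k (delete x m)) * G (sub k (delete x m))) =
  Sp d (length x) (fun m => F (rest k (delete x m))) * Sp d (length x) (fun m => G (sub k (delete x m))).
Proof. revert F G; induction x as [|c x IH]; intros F G.
  - change (length (@nil nat)) with 0%nat. rewrite !Sp_0. ring.
  - change (length (c :: x)) with (S (length x)). rewrite !Sp_S.
    destruct (Nat.eqb (label c) k) eqn:E.
    + rewrite (Sp_ext d _ (fun m => F (rest k (delete (c :: x) (false :: m))) * G (sub k (delete (c :: x) (false :: m))))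
                (fun m => F (rest k (delete x m)) * G (c :: sub k (delete x m)))).
      2: { intros m; rewrite delete_cons, rest_cons, sub_cons, E; reflexivity. }
      rewrite (Sp_ext d _ (fun m => F (rest k (delete (c :: x) (false :: m)))) (fun m => F (rest k (delete x m)))).
      2: { intros m; rewrite delete_cons, rest_cons, E; reflexivity. }
      rewrite (Sp_ext d _ (fun m => G (sub k (delete (c :: x) (false :: m)))) (fun m => G (c :: sub k (delete x m)))).
      2: { intros m; rewrite delete_cons, sub_cons, E; reflexivity. }
      rewrite (IH F (fun l => G (c :: l))). cbv beta. change (fun m : list bool => F (rest k (delete (c :: x) (true :: m))) * G (sub k (delete (c :: x) (true :: m)))) with (fun m : list bool => F (rest k (delete x m)) * G (sub k (delete x m))).
      change (fun m : list bool => F (rest k (delete (c :: x) (true :: m)))) with (fun m : list bool => F (rest k (delete x m))).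
      change (fun m : list bool => G (sub k (delete (c :: x) (true :: m)))) with (fun m : list bool => G (sub k (delete x m))).
      rewrite (IH F G). ring.
    + rewrite (Sp_ext d _ (fun m => F (rest k (delete (c :: x) (false :: m))) * G (sub k (delete (c :: x) (false :: m))))
                (fun m => F (c :: rest k (delete x m)) * G (sub k (delete x m)))).
      2: { intros m; rewrite delete_cons, rest_cons, sub_cons, E; reflexivity. }
      rewrite (Sp_ext d _ (fun m => F (rest k (delete (c :: x) (false :: m)))) (fun m => F (c :: rest k (delete x m)))).
      2: { intros m; rewrite delete_cons, rest_cons, E; reflexivity. }
      rewrite (Sp_ext d _ (fun m => G (sub k (delete (c :: x) (false :: m)))) (fun m => G (sub k (delete x m)))).
      2: { intros m; rewrite delete_cons, sub_cons, E; reflexivity. }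
      rewrite (IH (fun l => F (c :: l)) G). cbv beta. change (fun m : list bool => F (rest k (delete (c :: x) (true :: m))) * G (sub k (delete (c :: x) (true :: m)))) with (fun m : list bool => F (rest k (delete x m)) * G (sub k (delete x m))).
      change (fun m : list bool => F (rest k (delete (c :: x) (true :: m)))) with (fun m : list bool => F (rest k (delete x m))).
      change (fun m : list bool => G (sub k (delete (c :: x) (true :: m)))) with (fun m : list bool => G (sub k (delete x m))).
      rewrite (IH F G). ring.
Qed.

Lemma firstn_app_len {T} (l1 l2 : list T) n : length l1 = n -> firstn n (l1 ++ l2) = l1.
Proof. intros <-. induction l1; simpl; auto. f_equal; auto. Qed.
Lemma skipn_app_len {T} (l1 l2 : list T) n : length l1 = n -> skipn n (l1 ++ l2) = l2.
Proof. intros <-. induction l1; simpl; auto. Qed.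
Lemma app_inj_len {T} (a1 a2 b1 b2 : list T) : length a1 = length b1 -> a1 ++ a2 = b1 ++ b2 -> a1 = b1 /\ a2 = b2.
Proof. revert b1; induction a1; intros [|b b1] H E; simpl in *; try discriminate; auto.
  injection E; injection H; intros. destruct (IHa1 b1) as [-> ->]; auto. subst; auto. Qed.

Lemma In_outcomes K N x m : In (x, m) (outcomes K N) <-> In x (all_words (alphabet K) N) /\ In m (pat N).
Proof. unfold outcomes. rewrite in_flat_map. split.
  - intros [x' [Hx Hm]]. apply in_map_iff in Hm as [m' [E Hm]]. injection E; intros; subst. auto.
  - intros [Hx Hm]. exists x. split; auto. apply in_map_iff. exists m; auto. Qed.

Definition cat (o1 o2 : outcome) : outcome := (fst o1 ++ fst o2, snd o1 ++ snd o2).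
Definition Pprod (a : nat) (P1 P2 : list nat -> R) (x : list nat) := P1 (firstn a x) * P2 (skipn a x).

Section Prod.
Variable d : R.
Variables a b : nat.
Variables P1 P2 : list nat -> R.

Lemma PS (F : outcome -> R) :
  sumR (outcomes 1 (a + b)) (fun o => weight d (Pprod a P1 P2) o * F o) =
  sumR (outcomes 1 a) (fun o1 => sumR (outcomes 1 b) (fun o2 => weight d P1 o1 * weight d P2 o2 * F (cat o1 o2))).
Proof.
  rewrite sum_outcomes. unfold pat. rewrite words_concat.
  rewrite sum_outcomes. apply sumR_ext. intros x1 Hx1.
  assert (L1 : length x1 = a) by (apply In_all_words in Hx1; tauto).
  rewrite (sumR_ext _ _ (fun x2 => sumR (all_words [false;true] a) (fun m1 => sumR (all_words [false;true] b)
     (fun m2 => weight d (Pprod a P1 P2) (x1 ++ x2, m1 ++ m2) * F (x1 ++ x2, m1 ++ m2))))).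
  2: { intros x2 _. apply (words_concat _ a b (fun m => weight d (Pprod a P1 P2) (x1 ++ x2, m) * F (x1 ++ x2, m))). }
  rewrite sumR_swap. apply sumR_ext. intros m1 Hm1.
  assert (L2 : length m1 = a) by (apply In_all_words in Hm1; tauto).
  rewrite sum_outcomes. apply sumR_ext. intros x2 _. apply sumR_ext. intros m2 _.
  unfold weight, Pprod, cat; simpl. rewrite firstn_app_len, skipn_app_len, pp_app by auto. ring.
Qed.

End Prod.

Lemma weight_nonneg d P o : 0 <= d <= 1 -> (forall x, 0 <= P x) -> 0 <= weight d P o.
Proof. intros. unfold weight. apply Rmult_le_pos; auto. apply pp_nonneg; auto. Qed.

Lemma sum_weight d K N P : is_input_dist K N P -> sumR (outcomes K N) (weight d P) = 1.
Proof. intros [_ HP]. rewrite sum_outcomes. rewrite <- HP. apply sumR_ext. intros x _.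
  unfold weight; simpl. rewrite sumR_scal. change (fun m => pattern_prob d m) with (pattern_prob d).
  rewrite pp_sum1. ring. Qed.

Lemma sumR_prod {T U} (l1 : list T) (l2 : list U) f g :
  sumR l1 f * sumR l2 g = sumR l1 (fun x => sumR l2 (fun y => f x * g y)).
Proof. rewrite <- sumR_scal_r. apply sumR_ext. intros. rewrite sumR_scal. reflexivity. Qed.

Lemma Pprod_dist a b P1 P2 : is_input_dist 1 a P1 -> is_input_dist 1 b P2 ->
  is_input_dist 1 (a + b) (Pprod a P1 P2).
Proof. intros [H1 S1] [H2 S2]. split. intros; unfold Pprod; apply Rmult_le_pos; auto.
  rewrite words_concat. rewrite <- (Rmult_1_r 1). rewrite <- S1 at 1. rewrite <- S2. rewrite sumR_prod.
  apply sumR_ext. intros x1 Hx1. apply sumR_ext. intros x2 _. unfold Pprod.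
  assert (length x1 = a) by (apply In_all_words in Hx1; tauto).
  rewrite firstn_app_len, skipn_app_len; auto. Qed.

Section Prod2.
Variable d : R.
Variables a b : nat.
Variables P1 P2 : list nat -> R.
Hypothesis Hd : 0 <= d <= 1.
Hypothesis HP1 : is_input_dist 1 a P1.
Hypothesis HP2 : is_input_dist 1 b P2.

Let Om12 := outcomes 1 (a + b).
Let w12 := weight d (Pprod a P1 P2).

Lemma mg_prod fs fs1 fs2 o1 o2 :
  (forall o1' o2', In o1' (outcomes 1 a) -> In o2' (outcomes 1 b) ->
     ef fs (cat o1' o2') (cat o1 o2) = ef fs1 o1' o1 && ef fs2 o2' o2) ->
  mg Om12 w12 fs (cat o1 o2) = mg (outcomes 1 a) (weight d P1) fs1 o1 * mg (outcomes 1 b) (weight d P2) fs2 o2.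
Proof. intros H. rewrite !mg_def. unfold Om12, w12.
  rewrite (sumR_ext _ _ (fun o => weight d (Pprod a P1 P2) o * (if ef fs o (cat o1 o2) then 1 else 0))).
  2: { intros; destruct ef; ring. }
  rewrite PS, sumR_prod. apply sumR_ext. intros o1' H1. apply sumR_ext. intros o2' H2.
  rewrite H by auto. destruct (ef fs1 o1' o1), (ef fs2 o2' o2); simpl; ring. Qed.

End Prod2.

Ltac efb := unfold ef; cbn [forallb]; rewrite ?andb_true_r.
Ltac efP := apply eq_iff_eq_true; rewrite ?andb_true_iff, ?rv_eqb_true.

Lemma const_eqb o' o : rv_eqb (const_rv o') (const_rv o) = true.
Proof. apply rv_eqb_refl. Qed.

Lemma ef_const2 A B o' o : ef [A; B; const_rv] o' o = ef [A; B] o' o.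
Proof. efb. rewrite ?const_eqb, ?andb_true_r. reflexivity. Qed.
Lemma ef_const1 A o' o : ef [A; const_rv] o' o = ef [A] o' o.
Proof. efb. rewrite ?const_eqb, ?andb_true_r. reflexivity. Qed.
Lemma ef_const0 o' o : ef [const_rv] o' o = ef [] o' o.
Proof. efb. rewrite ?const_eqb. reflexivity. Qed.

Lemma cmi_simpl Om w A B : (forall o, 0 <= w o) -> sumR Om w = 1 ->
  cmi Om w A B const_rv = Lf Om w [A;B] - Lf Om w [A] - Lf Om w [B].
Proof. intros Hw Hs. rewrite cmi_L by auto.
  rewrite (Lf_ext Om w [A;B;const_rv] [A;B]) by (intros; apply ef_const2).
  rewrite (Lf_ext Om w [const_rv] []) by (intros; apply ef_const0).
  rewrite (Lf_ext Om w [A;const_rv] [A]) by (intros; apply ef_const1).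
  rewrite (Lf_ext Om w [B;const_rv] [B]) by (intros; apply ef_const1).
  rewrite Lf_nil; auto. ring. Qed.

Lemma delete_len x m : (length (delete x m) <= length x)%nat.
Proof. revert m; induction x; intros m. unfold delete; simpl; lia.
  destruct m as [|b m]. unfold delete; simpl; lia.
  rewrite delete_cons. destruct b; simpl; specialize (IHx m); lia. Qed.

Definition Y1r (a : nat) : RV := fun o => [delete (firstn a (fst o)) (firstn a (snd o))].
Definition Y2r (a : nat) : RV := fun o => [delete (skipn a (fst o)) (skipn a (snd o))].
Definition L1r (a : nat) : RV := fun o => [repeat 0%nat (length (delete (firstn a (fst o)) (firstn a (snd o))))].

Lemma delete_split a x m : length x = length m -> (a <= length x)%nat ->
  delete x m = delete (firstn a x) (firstn a m) ++ delete (skipn a x) (skipn a m).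
Proof. intros. rewrite <- (firstn_skipn a x) at 1. rewrite <- (firstn_skipn a m) at 1.
  apply delete_app. rewrite !length_firstn. lia. Qed.

Lemma repeat_inj (n1 n2 : nat) : repeat 0%nat n1 = repeat 0%nat n2 -> n1 = n2.
Proof. intros H. apply (f_equal (@length nat)) in H. rewrite !repeat_length in H. auto. Qed.

Definition Ib d n P := cmi (outcomes 1 n) (weight d P) X_rv Y_rv const_rv.

Lemma ef_tail g fs o' o : ef (g :: fs) o' o = true -> ef fs o' o = true.
Proof. rewrite ef_cons. intros H; apply andb_prop in H; tauto. Qed.

Lemma outcome_len K N x m : In (x, m) (outcomes K N) -> length x = N /\ length m = N.
Proof. intros H. apply In_outcomes in H as [H1 H2]. apply In_all_words in H1. apply In_all_words in H2. tauto. Qed.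

Section TwoBlock.
Variable d : R.
Variables a b : nat.
Variables P1 P2 : list nat -> R.
Hypothesis Hd : 0 <= d <= 1.
Hypothesis HP1 : is_input_dist 1 a P1.
Hypothesis HP2 : is_input_dist 1 b P2.

Let Om := outcomes 1 (a + b).
Let w := weight d (Pprod a P1 P2).

Lemma Hw12 : forall o, 0 <= w o.
Proof. intros; apply weight_nonneg; auto. apply (Pprod_dist a b P1 P2 HP1 HP2). Qed.
Lemma Hs12 : sumR Om w = 1.
Proof. apply sum_weight. apply Pprod_dist; auto. Qed.

Lemma E_Y12 : Lf Om w [Y1r a; Y2r a] = Lf Om w [L1r a; Y_rv].
Proof. apply Lf_ext. intros [x m] [x' m'] Ho Ho'.
  apply outcome_len in Ho as [Hx Hm]. apply outcome_len in Ho' as [Hx' Hm'].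
  efb. efP. unfold Y1r, Y2r, L1r, Y_rv; simpl fst; simpl snd.
  rewrite (delete_split a x m), (delete_split a x' m') by lia.
  split.
  - intros [H1 H2]. injection H1 as H1. injection H2 as H2. rewrite H1, H2. auto.
  - intros [H1 H2]. injection H1 as H1. apply repeat_inj in H1. injection H2 as H2.
    apply app_inj_len in H2 as [-> ->]; auto.
Qed.

Lemma E_XY12 : Lf Om w [X_rv; Y1r a; Y2r a] = Lf Om w [L1r a; X_rv; Y_rv].
Proof. apply Lf_ext. intros [x m] [x' m'] Ho Ho'.
  apply outcome_len in Ho as [Hx Hm]. apply outcome_len in Ho' as [Hx' Hm'].
  efb. efP. unfold X_rv, Y1r, Y2r, L1r, Y_rv; simpl fst; simpl snd.
  rewrite (delete_split a x m), (delete_split a x' m') by lia.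
  split.
  - intros [H0 [H1 H2]]. injection H1 as H1. injection H2 as H2. rewrite H1, H2. auto.
  - intros [H1 [H0 H2]]. injection H1 as H1. apply repeat_inj in H1. injection H2 as H2.
    apply app_inj_len in H2 as [-> ->]; auto.
Qed.

Lemma catP (x1 m1 x2 m2 : list _) : cat (x1, m1) (x2, m2) = (x1 ++ x2, m1 ++ m2).
Proof. reflexivity. Qed.

Lemma ln_split4 a1 a2 b1 b2 c1 c2 d1 d2 : 0 < a1 -> 0 < a2 -> 0 < b1 -> 0 < b2 -> 0 < c1 -> 0 < c2 -> 0 < d1 -> 0 < d2 ->
  ln (a1 * a2 * (c1 * c2) / (b1 * b2 * (d1 * d2))) = ln (a1 * c1 / (b1 * d1)) + ln (a2 * c2 / (b2 * d2)).
Proof. intros. rewrite <- ln_mult. f_equal. field. repeat split; lra.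
  all: apply Rdiv_lt_0_compat; apply Rmult_lt_0_compat; auto. Qed.

Lemma cond1 o1 o2 o1' o2' : In o1 (outcomes 1 a) -> In o1' (outcomes 1 a) ->
  ef [X_rv; Y1r a; Y2r a] (cat o1' o2') (cat o1 o2) = ef [X_rv; Y_rv; const_rv] o1' o1 && ef [X_rv; Y_rv; const_rv] o2' o2.
Proof. destruct o1 as [x1 m1], o1' as [x1' m1'], o2 as [x2 m2], o2' as [x2' m2']. intros H1 H1'.
  apply outcome_len in H1 as [Hx1 Hm1]. apply outcome_len in H1' as [Hx1' Hm1'].
  rewrite !catP. efb. efP. unfold X_rv, Y1r, Y2r, Y_rv; simpl fst; simpl snd.
  rewrite !firstn_app_len, !skipn_app_len by auto. split.
  - intros [H0 [H3 H4]]. injection H0 as H0. apply app_inj_len in H0 as [-> ->]; [|congruence]. auto.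
  - intros [[E1 E2] [E3 E4]]. injection E1 as E1. injection E3 as E3. subst. auto.
Qed.
Lemma cond2 o1 o2 o1' o2' : In o1 (outcomes 1 a) -> In o1' (outcomes 1 a) ->
  ef [X_rv] (cat o1' o2') (cat o1 o2) = ef [X_rv; const_rv] o1' o1 && ef [X_rv; const_rv] o2' o2.
Proof. destruct o1 as [x1 m1], o1' as [x1' m1'], o2 as [x2 m2], o2' as [x2' m2']. intros H1 H1'.
  apply outcome_len in H1 as [Hx1 Hm1]. apply outcome_len in H1' as [Hx1' Hm1'].
  rewrite !catP. efb. efP. unfold X_rv; simpl fst; simpl snd. split.
  - intros H0. injection H0 as H0. apply app_inj_len in H0 as [-> ->]; [|congruence]. auto.
  - intros [E1 E3]. injection E1 as E1. injection E3 as E3. subst. auto.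
Qed.
Lemma cond3 o1 o2 o1' o2' : In o1 (outcomes 1 a) -> In o1' (outcomes 1 a) ->
  ef [Y1r a; Y2r a] (cat o1' o2') (cat o1 o2) = ef [Y_rv; const_rv] o1' o1 && ef [Y_rv; const_rv] o2' o2.
Proof. destruct o1 as [x1 m1], o1' as [x1' m1'], o2 as [x2 m2], o2' as [x2' m2']. intros H1 H1'.
  apply outcome_len in H1 as [Hx1 Hm1]. apply outcome_len in H1' as [Hx1' Hm1'].
  rewrite !catP. efb. efP. unfold Y1r, Y2r, Y_rv; simpl fst; simpl snd.
  rewrite !firstn_app_len, !skipn_app_len by auto. split.
  - intros [H3 H4]. auto.
  - intros [E1 E3]. injection E1 as E1. injection E3 as E3. rewrite E1, E3. auto.
Qed.
Lemma cond4 o1 o2 o1' o2' : ef [] (cat o1' o2') (cat o1 o2) = ef [const_rv] o1' o1 && ef [const_rv] o2' o2.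
Proof. reflexivity. Qed.

Lemma two_block : Ib d (a + b) (Pprod a P1 P2) >= Ib d a P1 + Ib d b P2 - ln (INR a + 1).
Proof.
  assert (Hw1 : forall o, 0 <= weight d P1 o) by (intros; apply weight_nonneg; auto; apply HP1).
  assert (Hw2 : forall o, 0 <= weight d P2 o) by (intros; apply weight_nonneg; auto; apply HP2).
  assert (S1 := sum_weight d 1 a P1 HP1). assert (S2 := sum_weight d 1 b P2 HP2).
  unfold Ib. fold Om w.
  rewrite (cmi_simpl Om w _ _ Hw12 Hs12).
  assert (Split : Lf Om w [X_rv; Y1r a; Y2r a] - Lf Om w [X_rv] - Lf Om w [Y1r a; Y2r a] =
     cmi (outcomes 1 a) (weight d P1) X_rv Y_rv const_rv + cmi (outcomes 1 b) (weight d P2) X_rv Y_rv const_rv).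
  { transitivity (sumR Om (fun o => w o * ln (mg Om w [X_rv; Y1r a; Y2r a] o * mg Om w [] o /
        (mg Om w [X_rv] o * mg Om w [Y1r a; Y2r a] o)))).
    { rewrite sum4 by apply Hw12. rewrite (Lf_nil Om w Hs12). ring. }
    etransitivity; [apply (PS d a b P1 P2 (fun o => ln (mg Om w [X_rv; Y1r a; Y2r a] o * mg Om w [] o /
        (mg Om w [X_rv] o * mg Om w [Y1r a; Y2r a] o))))|].
    set (g1 := fun o => ln (marg (outcomes 1 a) (weight d P1) [X_rv; Y_rv; const_rv] o * marg (outcomes 1 a) (weight d P1) [const_rv] o /
        (marg (outcomes 1 a) (weight d P1) [X_rv; const_rv] o * marg (outcomes 1 a) (weight d P1) [Y_rv; const_rv] o))).
    set (g2 := fun o => ln (marg (outcomes 1 b) (weight d P2) [X_rv; Y_rv; const_rv] o * marg (outcomes 1 b) (weight d P2) [const_rv] o /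
        (marg (outcomes 1 b) (weight d P2) [X_rv; const_rv] o * marg (outcomes 1 b) (weight d P2) [Y_rv; const_rv] o))).
    transitivity (sumR (outcomes 1 a) (fun o1 => sumR (outcomes 1 b) (fun o2 =>
        weight d P1 o1 * g1 o1 * weight d P2 o2 + weight d P1 o1 * (weight d P2 o2 * g2 o2)))).
    { apply sumR_ext; intros o1 H1; apply sumR_ext; intros o2 H2.
      unfold Om, w. rewrite (mg_prod d a b P1 P2 _ _ _ o1 o2 (fun o1' o2' H1' _ => cond1 o1 o2 o1' o2' H1 H1')).
      rewrite (mg_prod d a b P1 P2 _ _ _ o1 o2 (fun o1' o2' _ _ => cond4 o1 o2 o1' o2')).
      rewrite (mg_prod d a b P1 P2 _ _ _ o1 o2 (fun o1' o2' H1' _ => cond2 o1 o2 o1' o2' H1 H1')).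
      rewrite (mg_prod d a b P1 P2 _ _ _ o1 o2 (fun o1' o2' H1' _ => cond3 o1 o2 o1' o2' H1 H1')).
      destruct (Hw1 o1) as [p1|z1]; [|rewrite <- z1; ring].
      destruct (Hw2 o2) as [p2|z2]; [|rewrite <- z2; ring].
      unfold g1, g2, mg. rewrite ln_split4; try ring.
      all: apply mg_pos; auto. }
    rewrite (sumR_ext _ _ (fun o1 => weight d P1 o1 * g1 o1 * 1 + weight d P1 o1 * cmi (outcomes 1 b) (weight d P2) X_rv Y_rv const_rv)).
    2: { intros o1 _. rewrite sumR_plus, sumR_scal, sumR_scal, S2. unfold cmi. fold g2. reflexivity. }
    rewrite sumR_plus, sumR_scal_r, sumR_scal_r, S1. rewrite Rmult_1_r, Rmult_1_l; reflexivity. }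
  rewrite E_XY12 in Split. rewrite E_Y12 in Split.
  assert (M : Lf Om w [L1r a; X_rv; Y_rv] <= Lf Om w [X_rv; Y_rv]).
  { apply Lf_mono. apply Hw12. intros o o' _ _. apply ef_tail. }
  assert (G := GI2 Om w Hw12 (L1r a) [Y_rv] (map (fun j => [repeat 0%nat j]) (seq 0 (S a))) Hs12).
  rewrite length_map, length_seq, S_INR in G.
  assert (G' : Lf Om w [Y_rv] - Lf Om w [L1r a; Y_rv] <= ln (INR a + 1)).
  { apply G. intros [x m] Ho. apply outcome_len in Ho as [Hx Hm]. apply in_map_iff.
    eexists; split; [reflexivity|]. apply in_seq. pose proof (delete_len (firstn a x) (firstn a m)).
    rewrite length_firstn in H. simpl fst; simpl snd. lia. }
  lra.
Qed.

End TwoBlock.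

Lemma cmi_nonneg Om w A B C : (forall o, 0 <= w o) -> 0 <= cmi Om w A B C.
Proof. intros Hw. rewrite cmi_L by auto. pose proof (GI1 Om w Hw [A] [B] [C]). simpl app in H. lra. Qed.

Fixpoint Pw (n : nat) (P : list nat -> R) (m : nat) : list nat -> R :=
  match m with
  | O => fun x => match x with [] => 1 | _ => 0 end
  | S m' => Pprod n P (Pw n P m')
  end.

Lemma Pw_dist n P m : is_input_dist 1 n P -> is_input_dist 1 (m * n) (Pw n P m).
Proof. intros HP. induction m.
  - split. intros [|]; simpl; lra. simpl. rewrite sumR_cons, sumR_nil. simpl; lra.
  - simpl. apply Pprod_dist; auto. Qed.

Lemma Pw_Ib d n P m : 0 <= d <= 1 -> is_input_dist 1 n P ->
  Ib d (m * n) (Pw n P m) >= INR m * (Ib d n P - ln (INR n + 1)).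
Proof. intros Hd HP. induction m.
  - simpl INR. rewrite Rmult_0_l. apply Rle_ge. unfold Ib. apply cmi_nonneg.
    intros; apply weight_nonneg; auto. apply (Pw_dist n P 0 HP).
  - change (S m * n)%nat with (n + m * n)%nat. simpl Pw.
    pose proof (two_block d n (m * n) P (Pw n P m) Hd HP (Pw_dist n P m HP)).
    rewrite S_INR. lra. Qed.

Lemma cap_bound d C2 n P : 0 <= d <= 1 -> is_binary_capacity d C2 -> (1 <= n)%nat ->
  is_input_dist 1 n P -> Ib d n P <= INR n * C2 + ln (INR n + 1).
Proof.
  intros Hd [c [Hlub Hcv]] Hn HP.
  set (v := (Ib d n P - ln (INR n + 1)) / INR n).
  assert (Hnpos : 0 < INR n) by (apply lt_0_INR; lia).
  assert (Hc : forall m, (1 <= m)%nat -> v <= c (m * n)%nat).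
  { intros m Hm. destruct (Hlub (m * n)%nat) as [Hub _]. nia.
    assert (Hr : binary_rate_set d (m * n) (Ib d (m * n) (Pw n P m) / INR (m * n))).
    { exists (Pw n P m). split. apply Pw_dist; auto. reflexivity. }
    specialize (Hub _ Hr). eapply Rle_trans; [|exact Hub].
    pose proof (Pw_Ib d n P m Hd HP).
    rewrite mult_INR. assert (0 < INR m) by (apply lt_0_INR; lia).
    unfold v. apply (Rmult_le_reg_r (INR m * INR n)). nra.
    unfold Rdiv. rewrite !Rmult_assoc.
    rewrite (Rinv_l (INR m * INR n)) by nra.
    replace ((Ib d n P - ln (INR n + 1)) * (/ INR n * (INR m * INR n))) with (INR m * (Ib d n P - ln (INR n + 1))) by (field; lra).
    lra. }
  assert (v <= C2).
  { destruct (Rle_lt_dec v C2) as [H|H]; auto. exfalso.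
    destruct (Hcv (v - C2)) as [N0 HN0]. lra.
    specialize (HN0 (S N0 * n)%nat). assert (S N0 * n >= N0)%nat by nia.
    specialize (HN0 H0). specialize (Hc (S N0) ltac:(lia)). unfold R_dist in HN0.
    apply Rabs_def2 in HN0. lra. }
  unfold v in H. apply (Rmult_le_compat_r (INR n)) in H; [|lra].
  unfold Rdiv in H. rewrite Rmult_assoc, Rinv_l in H by lra. lra.
Qed.

Lemma label_range s : (1 <= label s)%nat -> (2 * label s - 1 <= s <= 2 * label s)%nat.
Proof. unfold label. intros H. pose proof (Nat.div_mod (s + 1) 2 ltac:(lia)).
  pose proof (Nat.mod_upper_bound (s + 1) 2 ltac:(lia)). lia. Qed.

Lemma label_pos s : (1 <= s)%nat -> (1 <= label s)%nat.
Proof. unfold label. intros H. pose proof (Nat.div_mod (s + 1) 2 ltac:(lia)).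
  pose proof (Nat.mod_upper_bound (s + 1) 2 ltac:(lia)). lia. Qed.

Lemma label_le s K : (s <= 2 * K)%nat -> (label s <= K)%nat.
Proof. unfold label. intros H. pose proof (Nat.div_mod (s + 1) 2 ltac:(lia)).
  pose proof (Nat.mod_upper_bound (s + 1) 2 ltac:(lia)). lia. Qed.

Lemma alphabet_label K s : In s (alphabet K) -> (1 <= label s <= K)%nat.
Proof. unfold alphabet. rewrite in_seq. intros. split. apply label_pos; lia. apply label_le; lia. Qed.

Lemma sub_label j l s : In s (sub j l) -> label s = j.
Proof. unfold sub. rewrite filter_In. intros [_ H]. apply Nat.eqb_eq; auto. Qed.

Lemma sub_len j l : (length (sub j l) <= length l)%nat.
Proof. unfold sub. apply filter_length_le. Qed.

Lemma recon K x x' : (forall s, In s x -> (1 <= label s <= K)%nat) -> map label x = map label x' ->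
  (forall j, (1 <= j <= K)%nat -> sub j x = sub j x') -> x = x'.
Proof. revert x'; induction x as [|a x IH]; intros [|a' x'] Hr Hl Hs; simpl in Hl; try discriminate; auto.
  injection Hl as Hl1 Hl2.
  assert (Ha : (1 <= label a <= K)%nat) by (apply Hr; simpl; auto).
  pose proof (Hs (label a) Ha) as E. rewrite !sub_cons in E. rewrite Nat.eqb_refl in E. rewrite Hl1, Nat.eqb_refl in E.
  injection E as E1 E2. subst a'. f_equal. apply IH; auto. intros; apply Hr; simpl; auto.
  intros j Hj. specialize (Hs j Hj). rewrite !sub_cons in Hs. destruct (Nat.eqb (label a) j).
  injection Hs; auto. auto. Qed.

Lemma sub_rest j k l : j <> k -> sub j (rest k l) = sub j l.
Proof. intros H. induction l; auto. rewrite rest_cons. destruct (Nat.eqb (label a) k) eqn:E.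
  - rewrite sub_cons. apply Nat.eqb_eq in E. assert (Nat.eqb (label a) j = false) by (apply Nat.eqb_neq; lia).
    rewrite H0. auto.
  - rewrite !sub_cons. rewrite IHl. reflexivity. Qed.

Definition rr (k : nat) (s : nat) : nat := (s + 2 - 2 * k)%nat.
Definition rho (k : nat) (x : list nat) : list nat := map (rr k) (sub k x).

Lemma rr_inj_list k l l' : (1 <= k)%nat -> (forall s, In s l -> label s = k) -> (forall s, In s l' -> label s = k) ->
  map (rr k) l = map (rr k) l' -> l = l'.
Proof. intros Hk. revert l'; induction l as [|a l IH]; intros [|a' l'] H1 H2 E; simpl in E; try discriminate; auto.
  injection E as E1 E2. f_equal.
  - pose proof (label_range a). pose proof (label_range a'). rewrite (H1 a) in H by (simpl; auto).
    rewrite (H2 a') in H0 by (simpl; auto). unfold rr in E1. specialize (H Hk). specialize (H0 Hk). lia.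
  - apply IH; auto; intros; [apply H1|apply H2]; simpl; auto. Qed.

Lemma rho_in k x : (1 <= k)%nat -> forall s, In s (rho k x) -> In s [1; 2]%nat.
Proof. intros Hk s H. unfold rho in H. apply in_map_iff in H as [t [<- Ht]].
  apply sub_label in Ht. pose proof (label_range t). rewrite Ht in H. specialize (H Hk). unfold rr.
  simpl. lia. Qed.

Lemma Lf_prod_eq Om w A B C D : (forall o, 0 <= w o) ->
  (forall o, In o Om -> 0 < w o -> mg Om w A o * mg Om w B o = mg Om w C o * mg Om w D o) ->
  Lf Om w A + Lf Om w B = Lf Om w C + Lf Om w D.
Proof. intros Hw H. unfold Lf. rewrite <- !sumR_plus. apply sumR_ext. intros o Ho.
  destruct (Hw o) as [Hp|H0]; [|rewrite <- H0; ring].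
  rewrite <- !Rmult_plus_distr_l. f_equal. rewrite <- !ln_mult; try (apply mg_pos; auto).
  rewrite H; auto. Qed.

Lemma Sp_zero d n : Sp d n (fun _ => 0) = 0.
Proof. unfold Sp. rewrite (sumR_ext _ _ (fun _ => 0)) by (intros; ring). apply sumR_zero. Qed.
Lemma Sp_one d n : Sp d n (fun _ => 1) = 1.
Proof. unfold Sp. rewrite (sumR_ext _ _ (pattern_prob d)) by (intros; ring). apply pp_sum1. Qed.

Lemma Sp_ext_in d n H1 H2 : (forall m, In m (pat n) -> H1 m = H2 m) -> Sp d n H1 = Sp d n H2.
Proof. intros E; unfold Sp; apply sumR_ext; intros; rewrite E; auto. Qed.
Lemma Sp_const d n c : Sp d n (fun _ => c) = c.
Proof. unfold Sp. rewrite sumR_scal_r. change (sumR (pat n) (fun m => pattern_prob d m)) with (sumR (pat n) (pattern_prob d)). rewrite pp_sum1; ring. Qed.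
Lemma Sp_scal d n c H : Sp d n (fun m => c * H m) = c * Sp d n H.
Proof. unfold Sp. rewrite <- sumR_scal. apply sumR_ext; intros; ring. Qed.


Lemma Ib0 d P' : 0 <= d <= 1 -> is_input_dist 1 0 P' -> Ib d 0 P' <= 0.
Proof. intros Hd HP'. unfold Ib.
  assert (Hw' : forall o, 0 <= weight d P' o) by (intros; apply weight_nonneg; auto; apply HP').
  assert (Hs' := sum_weight d 1 0 P' HP').
  rewrite cmi_simpl by auto.
  assert (Hsing : forall o, In o (outcomes 1 0) -> o = ([], [])).
  { intros o Ho. simpl in Ho. destruct Ho as [<-|[]]. reflexivity. }
  assert (Htriv : forall fs, Lf (outcomes 1 0) (weight d P') fs = Lf (outcomes 1 0) (weight d P') []).
  { intros fs. apply Lf_ext. intros o o' Ho Ho'. rewrite (Hsing o Ho), (Hsing o' Ho'). rewrite ef_refl. reflexivity. }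
  rewrite (Htriv [X_rv; Y_rv]), (Htriv [X_rv]), (Htriv [Y_rv]). rewrite Lf_nil by auto. lra. Qed.

Lemma sumR_indic_nat (l : list nat) x (f : nat -> R) : NoDup l -> In x l ->
  sumR l (fun n => if Nat.eqb x n then f n else 0) = f x.
Proof. intros. rewrite (sumR_ext _ _ (fun n => if Nat.eq_dec n x then f n else 0)).
  apply sumR_indic; auto. intros n _. destruct (Nat.eqb x n) eqn:E, (Nat.eq_dec n x); auto.
  apply Nat.eqb_eq in E; subst; contradiction. subst; rewrite Nat.eqb_refl in E; discriminate. Qed.

Lemma sumR_nonneg_zero {T} (l : list T) f : (forall x, In x l -> 0 <= f x) -> sumR l f = 0 -> forall x, In x l -> f x = 0.
Proof. induction l; intros H S x Hx; [destruct Hx|]. rewrite sumR_cons in S.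
  assert (0 <= f a) by (apply H; simpl; auto). assert (0 <= sumR l f) by (apply sumR_nonneg; intros; apply H; simpl; auto).
  destruct Hx as [<-|Hx]. lra. apply IHl; auto. intros; apply H; simpl; auto. lra. Qed.

Section Main.
Variables (K N : nat) (d : R) (P : list nat -> R) (k : nat).
Hypothesis HK : (1 <= K)%nat.
Hypothesis Hd : 0 <= d <= 1.
Hypothesis HP : is_input_dist K N P.
Hypothesis Hk : (1 <= k <= K)%nat.

Let Om := outcomes K N.
Let w := weight d P.
Let W := all_words (alphabet K) N.

Lemma Hw : forall o, 0 <= w o.
Proof. intros; apply weight_nonneg; auto. apply HP. Qed.
Lemma Hs : sumR Om w = 1.
Proof. apply sum_weight; auto. Qed.

Lemma NoDupW : NoDup W.
Proof. apply NoDup_all_words. apply seq_NoDup. Qed.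

Lemma W_len x : In x W -> length x = N.
Proof. intros H; apply In_all_words in H; tauto. Qed.

Lemma mg_formula fs o : mg Om w fs o = sumR W (fun x' => P x' * Sp d N (fun m' => if ef fs (x', m') o then 1 else 0)).
Proof. rewrite mg_def. unfold Om. rewrite sum_outcomes. apply sumR_ext. intros x' _.
  unfold Sp. rewrite <- sumR_scal. apply sumR_ext. intros m' _. unfold w, weight; simpl. destruct ef; ring. Qed.

Lemma mgX fs x m : In x W -> mg Om w (X_rv :: fs) (x, m) = P x * Sp d N (fun m' => if ef fs (x, m') (x, m) then 1 else 0).
Proof. intros Hx. rewrite mg_formula.
  rewrite (sumR_ext _ _ (fun x' => if list_eq_dec Nat.eq_dec x' x then P x' * Sp d N (fun m' => if ef fs (x', m') (x, m) then 1 else 0) else 0)).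
  - apply (sumR_indic (list_eq_dec Nat.eq_dec) W x (fun x' => P x' * Sp d N (fun m' => if ef fs (x', m') (x, m) then 1 else 0))); auto.
    apply NoDupW.
  - intros x' _. destruct (list_eq_dec Nat.eq_dec x' x).
    + subst. f_equal. apply Sp_ext. intros m'. rewrite ef_cons. unfold X_rv; simpl fst. rewrite rv_eqb_refl. reflexivity.
    + rewrite (Sp_ext d N _ (fun _ => 0)). rewrite Sp_zero; ring.
      intros m'. rewrite ef_cons. unfold X_rv; simpl fst.
      assert (rv_eqb [x'] [x] = false). { destruct (rv_eqb [x'] [x]) eqn:E; auto. apply rv_eqb_true in E. injection E; intros; contradiction. }
      rewrite H. reflexivity.
Qed.

Definition Phi (l : list nat) := map (fun j => sub j l) (seq 1 (k - 1)).

Lemma Ypre_Phi o : Yprefix_rv k o = Phi (rest k (delete (fst o) (snd o))).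
Proof. unfold Yprefix_rv, Phi. apply map_ext_in. intros j Hj. apply in_seq in Hj.
  rewrite sub_rest; auto. lia. Qed.

Lemma Markov : Lf Om w [X_rv; Yk_rv k; Yprefix_rv k] + Lf Om w [X_rv] = Lf Om w [X_rv; Yk_rv k] + Lf Om w [X_rv; Yprefix_rv k].
Proof. apply Lf_prod_eq. apply Hw. intros [x m] Ho _.
  assert (Hx : In x W) by (apply In_outcomes in Ho; tauto).
  rewrite !mgX by auto.
  set (G := fun l : list nat => if rv_eqb [l] (Yk_rv k (x, m)) then 1 else 0).
  set (F := fun l : list nat => if rv_eqb (Phi l) (Yprefix_rv k (x, m)) then 1 else 0).
  rewrite (Sp_ext d N _ (fun m' => F (rest k (delete x m')) * G (sub k (delete x m')))).
  2: { intros m'. unfold F, G. efb. unfold Yk_rv at 1. rewrite (Ypre_Phi (x, m')). simpl fst; simpl snd.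
       destruct (rv_eqb [sub k (delete x m')] (Yk_rv k (x, m))), (rv_eqb (Phi (rest k (delete x m'))) (Yprefix_rv k (x, m))); simpl; ring. }
  rewrite (Sp_ext d N (fun m' => if ef [Yk_rv k] (x, m') (x, m) then 1 else 0) (fun m' => G (sub k (delete x m')))).
  2: { intros m'. unfold G. efb. reflexivity. }
  rewrite (Sp_ext d N (fun m' => if ef [Yprefix_rv k] (x, m') (x, m) then 1 else 0) (fun m' => F (rest k (delete x m')))).
  2: { intros m'. unfold F. efb. rewrite (Ypre_Phi (x, m')). reflexivity. }
  rewrite (Sp_ext d N (fun m' => if ef [] (x, m') (x, m) then 1 else 0) (fun _ => 1)) by reflexivity.
  rewrite Sp_one. rewrite <- (W_len x Hx). rewrite IND. ring.
Qed.

Definition Rr : RV := fun o => [sub k (fst o)].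
Definition Q (s : list nat) (y : list (list nat)) := Sp d (length s) (fun m'' => if rv_eqb [delete s m''] y then 1 else 0).

Lemma YkQ x' y : In x' W -> Sp d N (fun m' => if rv_eqb (Yk_rv k (x', m')) y then 1 else 0) = Q (sub k x') y.
Proof. intros Hx. rewrite <- (W_len x' Hx). unfold Q.
  rewrite (Sp_ext_in d (length x') _ (fun m' => (fun m'' => if rv_eqb [delete (sub k x') m''] y then 1 else 0) (subpat k x' m'))).
  unfold Sp; apply (ML d k x' (fun m'' => if rv_eqb [delete (sub k x') m''] y then 1 else 0)). intros m' Hm. apply In_all_words in Hm as [Hm _]. unfold Yk_rv; simpl fst; simpl snd.
  rewrite sub_delete by auto. reflexivity. Qed.

Lemma Rswap : Lf Om w [X_rv; Yk_rv k] + Lf Om w [Rr] = Lf Om w [Rr; Yk_rv k] + Lf Om w [X_rv].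
Proof. apply Lf_prod_eq. apply Hw. intros [x m] Ho _.
  assert (Hx : In x W) by (apply In_outcomes in Ho; tauto).
  rewrite !mgX by auto.
  rewrite (Sp_ext d N (fun m' => if ef [Yk_rv k] (x, m') (x, m) then 1 else 0) (fun m' => if rv_eqb (Yk_rv k (x, m')) (Yk_rv k (x, m)) then 1 else 0)) by (intros; efb; reflexivity).
  rewrite YkQ by auto.
  rewrite (Sp_ext d N (fun m' => if ef [] (x, m') (x, m) then 1 else 0) (fun _ => 1)) by reflexivity.
  rewrite Sp_one.
  rewrite !mg_formula.
  rewrite (sumR_ext _ (fun x' => P x' * Sp d N (fun m' => if ef [Rr; Yk_rv k] (x', m') (x, m) then 1 else 0))
     (fun x' => Q (sub k x) (Yk_rv k (x, m)) * (P x' * (if rv_eqb [sub k x'] [sub k x] then 1 else 0)))).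
  2: { intros x' Hx'. destruct (rv_eqb [sub k x'] [sub k x]) eqn:E.
       - rewrite (Sp_ext d N _ (fun m' => if rv_eqb (Yk_rv k (x', m')) (Yk_rv k (x, m)) then 1 else 0)).
         rewrite YkQ by auto. apply rv_eqb_true in E. injection E as E. rewrite E. ring.
         intros m'. efb. unfold Rr at 1 2; simpl fst. rewrite E. reflexivity.
       - rewrite (Sp_ext d N _ (fun _ => 0)). rewrite Sp_zero. ring.
         intros m'. efb. unfold Rr at 1 2; simpl fst. rewrite E. reflexivity. }
  rewrite sumR_scal.
  rewrite (sumR_ext _ (fun x' => P x' * Sp d N (fun m' => if ef [Rr] (x', m') (x, m) then 1 else 0))
     (fun x' => P x' * (if rv_eqb [sub k x'] [sub k x] then 1 else 0))).
  2: { intros x' _. rewrite (Sp_ext d N _ (fun _ => if rv_eqb [sub k x'] [sub k x] then 1 else 0)). rewrite Sp_const. reflexivity.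
       intros m'. efb. reflexivity. }
  ring.
Qed.


Definition NR : RV := fun o => [repeat 0%nat (length (sub k (fst o)))].
Definition Nf (o : outcome) : nat := length (sub k (fst o)).
Definition pn (n : nat) : R := sumR Om (fun o => if Nat.eqb (Nf o) n then w o else 0).
Definition Pn (n : nat) (x' : list nat) : R :=
  sumR W (fun x => if list_eq_dec Nat.eq_dec x' (rho k x) then P x else 0) / pn n.
Definition pi (o : outcome) : outcome := (rho k (fst o), subpat k (fst o) (snd o)).

Lemma pn_formula n : pn n = sumR W (fun x => if Nat.eqb (length (sub k x)) n then P x else 0).
Proof. unfold pn, Om. rewrite sum_outcomes. apply sumR_ext. intros x _. unfold Nf; simpl fst.
  destruct (Nat.eqb (length (sub k x)) n). unfold w, weight; simpl. rewrite sumR_scal.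
  change (fun m => pattern_prob d m) with (pattern_prob d). rewrite pp_sum1; ring. apply sumR_zero. Qed.

Lemma pn_nonneg n : 0 <= pn n.
Proof. apply sumR_nonneg. intros; destruct Nat.eqb; [apply Hw|lra]. Qed.

Lemma SI n x (f : list nat -> R) : In x W ->
  sumR (all_words (alphabet 1) n) (fun x' => if list_eq_dec Nat.eq_dec x' (rho k x) then f x' else 0) =
  if Nat.eqb (length (sub k x)) n then f (rho k x) else 0.
Proof. intros Hx. destruct (Nat.eqb (length (sub k x)) n) eqn:E.
  - apply sumR_indic. apply NoDup_all_words. apply seq_NoDup.
    apply In_all_words. split. unfold rho; rewrite length_map. apply Nat.eqb_eq; auto.
    intros s Hs. apply (rho_in k x); [lia|auto].
  - apply sumR_indic0. intros H. apply In_all_words in H as [H _]. unfold rho in H. rewrite length_map in H.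
    apply Nat.eqb_neq in E. contradiction. Qed.

Lemma PF n (G : outcome -> R) : 0 < pn n ->
  sumR Om (fun o => if Nat.eqb (Nf o) n then w o * G (pi o) else 0) =
  pn n * sumR (outcomes 1 n) (fun o' => weight d (Pn n) o' * G o').
Proof. intros Hp.
  unfold Om. rewrite sum_outcomes.
  rewrite (sumR_ext _ _ (fun x => if Nat.eqb (length (sub k x)) n then P x * Sp d n (fun m'' => G (rho k x, m'')) else 0)).
  2: { intros x Hx. unfold Nf; simpl fst. destruct (Nat.eqb (length (sub k x)) n) eqn:E.
       - apply Nat.eqb_eq in E. rewrite <- E. unfold Sp. rewrite <- (ML d k x (fun m'' => G (rho k x, m''))).
         rewrite (W_len x Hx). rewrite <- sumR_scal. apply sumR_ext. intros m _.
         unfold w, weight, pi; simpl. ring.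
       - apply sumR_zero. }
  rewrite sum_outcomes. rewrite <- sumR_scal.
  symmetry. transitivity (sumR (all_words (alphabet 1) n) (fun x' => sumR W (fun x => if list_eq_dec Nat.eq_dec x' (rho k x) then P x * Sp d n (fun m'' => G (x', m'')) else 0))).
  { apply sumR_ext. intros x' _. unfold Pn. rewrite (sumR_ext _ _ (fun m => (sumR W (fun x => if list_eq_dec Nat.eq_dec x' (rho k x) then P x else 0) / pn n) * (pattern_prob d m * G (x', m)))).
       2: { intros; unfold weight; simpl; ring. }
       rewrite sumR_scal. fold (Sp d n (fun m'' => G (x', m''))).
       set (S := sumR W (fun x => if list_eq_dec Nat.eq_dec x' (rho k x) then P x else 0)).
       transitivity (S * Sp d n (fun m'' => G (x', m''))). { field. lra. }
       unfold S.
       rewrite <- sumR_scal_r. apply sumR_ext. intros; destruct list_eq_dec; ring. }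
  symmetry. rewrite sumR_swap. apply sumR_ext. intros x Hx.
  rewrite (SI n x (fun x' => P x * Sp d n (fun m'' => G (x', m'')))); auto.
Qed.

Lemma Pn_dist n : 0 < pn n -> is_input_dist 1 n (Pn n).
Proof. intros Hp. split.
  - intros x'. unfold Pn. apply div_nonneg; [|lra]. apply sumR_nonneg. intros; destruct list_eq_dec; [apply HP|lra].
  - unfold Pn. unfold Rdiv. rewrite sumR_scal_r. rewrite sumR_swap.
    rewrite (sumR_ext _ _ (fun x => if Nat.eqb (length (sub k x)) n then P x else 0)).
    rewrite <- pn_formula. field. lra.
    intros x Hx. apply (SI n x (fun _ => P x)); auto. Qed.

Lemma mg_pi fs fs' o n : In o Om -> Nf o = n -> 0 < pn n ->
  (forall o', In o' Om -> ef fs o' o = Nat.eqb (Nf o') n && ef fs' (pi o') (pi o)) ->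
  mg Om w fs o = pn n * mg (outcomes 1 n) (weight d (Pn n)) fs' (pi o).
Proof. intros Ho HN Hp H. rewrite mg_def.
  rewrite (sumR_ext _ _ (fun o' => if Nat.eqb (Nf o') n then w o' * (if ef fs' (pi o') (pi o) then 1 else 0) else 0)).
  2: { intros o' Ho'. rewrite H by auto. destruct Nat.eqb, ef; simpl; ring. }
  rewrite (PF n (fun o' => if ef fs' o' (pi o) then 1 else 0)) by auto.
  rewrite mg_def. f_equal. apply sumR_ext. intros; destruct ef; ring. Qed.

Lemma map_rr_eqb l l' : (forall s, In s l -> label s = k) -> (forall s, In s l' -> label s = k) ->
  rv_eqb [l'] [l] = rv_eqb [map (rr k) l'] [map (rr k) l].
Proof. intros H1 H2. apply eq_iff_eq_true. rewrite !rv_eqb_true. split.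
  - intros E; injection E as E; rewrite E; reflexivity.
  - intros E; injection E as E. apply rr_inj_list in E; auto. rewrite E; auto. lia. Qed.

Lemma Om_len x m : In (x, m) Om -> length x = N /\ length m = N.
Proof. apply outcome_len. Qed.

Lemma Y_pi o : In o Om -> Y_rv (pi o) = [map (rr k) (sub k (delete (fst o) (snd o)))].
Proof. destruct o as [x m]. intros Ho. apply Om_len in Ho as [H1 H2]. unfold Y_rv, pi; simpl.
  unfold rho. rewrite delete_map. rewrite sub_delete by lia. reflexivity. Qed.

Lemma R_eqb o o' : rv_eqb (Rr o') (Rr o) = rv_eqb (X_rv (pi o')) (X_rv (pi o)).
Proof. unfold Rr, X_rv, pi; simpl. apply map_rr_eqb; intros; eapply sub_label; eauto. Qed.

Lemma Yk_eqb o o' : In o Om -> In o' Om -> rv_eqb (Yk_rv k o') (Yk_rv k o) = rv_eqb (Y_rv (pi o')) (Y_rv (pi o)).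
Proof. intros Ho Ho'. rewrite !Y_pi by auto. unfold Yk_rv. apply map_rr_eqb; intros; eapply sub_label; eauto. Qed.

Lemma NR_eqb o o' : rv_eqb (NR o') (NR o) = Nat.eqb (Nf o') (Nf o).
Proof. apply eq_iff_eq_true. rewrite rv_eqb_true, Nat.eqb_eq. unfold NR, Nf. split.
  - intros E; injection E as E. apply repeat_inj; auto.
  - intros ->; reflexivity. Qed.

Ltac corr H Ho Ho' := efb; rewrite ?R_eqb, ?NR_eqb, ?(Yk_eqb _ _ Ho Ho'), H;
  repeat match goal with |- context [rv_eqb ?a ?b] => destruct (rv_eqb a b) end;
  destruct (Nat.eqb _ _); reflexivity.

Section Corr.
Variables (o : outcome) (n : nat).
Hypothesis Ho : In o Om.
Hypothesis HN : Nf o = n.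
Lemma corr1 o' : In o' Om -> ef [Rr; Yk_rv k; NR] o' o = Nat.eqb (Nf o') n && ef [X_rv; Y_rv; const_rv] (pi o') (pi o).
Proof. intros Ho'. corr HN Ho Ho'. Qed.
Lemma corr2 o' : In o' Om -> ef [NR] o' o = Nat.eqb (Nf o') n && ef [const_rv] (pi o') (pi o).
Proof. intros Ho'. corr HN Ho Ho'. Qed.
Lemma corr3 o' : In o' Om -> ef [Rr; NR] o' o = Nat.eqb (Nf o') n && ef [X_rv; const_rv] (pi o') (pi o).
Proof. intros Ho'. corr HN Ho Ho'. Qed.
Lemma corr4 o' : In o' Om -> ef [Yk_rv k; NR] o' o = Nat.eqb (Nf o') n && ef [Y_rv; const_rv] (pi o') (pi o).
Proof. intros Ho'. corr HN Ho Ho'. Qed.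
End Corr.

Lemma Nf_le o : In o Om -> (Nf o <= N)%nat.
Proof. destruct o as [x m]. intros Ho. apply Om_len in Ho as [H _]. unfold Nf; simpl. rewrite <- H. apply sub_len. Qed.

Lemma split_n (f : outcome -> R) :
  sumR Om f = sumR (seq 0 (S N)) (fun n => sumR Om (fun o => if Nat.eqb (Nf o) n then f o else 0)).
Proof. rewrite sumR_swap. apply sumR_ext. intros o Ho. symmetry.
  apply (sumR_indic_nat _ (Nf o) (fun _ => f o)). apply seq_NoDup. apply in_seq. pose proof (Nf_le o Ho). lia. Qed.

Lemma Tn_bound C2 n : is_binary_capacity d C2 -> (n <= N)%nat ->
  sumR Om (fun o => if Nat.eqb (Nf o) n then w o * ln (mg Om w [Rr; Yk_rv k; NR] o * mg Om w [NR] o /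
     (mg Om w [Rr; NR] o * mg Om w [Yk_rv k; NR] o)) else 0)
  <= pn n * INR n * C2 + pn n * ln (INR N + 1).
Proof. intros Hcap HnN. destruct (pn_nonneg n) as [Hp|H0].
  - set (w' := weight d (Pn n)). set (Om' := outcomes 1 n).
    set (g' := fun o' => ln (mg Om' w' [X_rv; Y_rv; const_rv] o' * mg Om' w' [const_rv] o' /
        (mg Om' w' [X_rv; const_rv] o' * mg Om' w' [Y_rv; const_rv] o'))).
    rewrite (sumR_ext _ _ (fun o => if Nat.eqb (Nf o) n then w o * g' (pi o) else 0)).
    2: { intros o Ho. destruct (Nat.eqb (Nf o) n) eqn:E; auto. apply Nat.eqb_eq in E.
         rewrite (mg_pi _ _ o n Ho E Hp (corr1 o n Ho E)), (mg_pi _ _ o n Ho E Hp (corr2 o n E)),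
           (mg_pi _ _ o n Ho E Hp (corr3 o n E)), (mg_pi _ _ o n Ho E Hp (corr4 o n Ho E)).
         unfold g'. f_equal. f_equal. fold Om' w'.
         set (A := mg Om' w' [X_rv; Y_rv; const_rv] (pi o)). set (B := mg Om' w' [const_rv] (pi o)).
         set (C := mg Om' w' [X_rv; const_rv] (pi o)). set (D := mg Om' w' [Y_rv; const_rv] (pi o)).
         transitivity ((pn n * / pn n) * (pn n * / pn n) * (A * B / (C * D))).
         unfold Rdiv; rewrite !Rinv_mult; ring. rewrite Rinv_r by lra. ring. }
    rewrite (PF n g' Hp).
    assert (HI : Ib d n (Pn n) <= INR n * C2 + ln (INR N + 1)).
    { assert (ln (INR n + 1) <= ln (INR N + 1)).
      { apply ln_le'. pose proof (pos_INR n); lra. apply le_INR in HnN. lra. }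
      destruct n as [|n'].
      - pose proof (Ib0 d (Pn 0) Hd (Pn_dist 0 Hp)). simpl INR in *. rewrite Rplus_0_l, ln_1 in H. lra.
      - pose proof (cap_bound d C2 (S n') (Pn (S n')) Hd Hcap ltac:(lia) (Pn_dist _ Hp)). lra. }
    unfold Ib in HI. fold Om' w' in HI. unfold cmi in HI. fold Om' w'. 
    change (sumR Om' (fun o' => w' o' * g' o') <= INR n * C2 + ln (INR N + 1)) in HI.
    rewrite Rmult_assoc. rewrite <- Rmult_plus_distr_l. apply Rmult_le_compat_l; lra.
  - rewrite (sumR_ext _ _ (fun _ => 0)). rewrite sumR_zero. rewrite <- H0. lra.
    intros o Ho. destruct (Nat.eqb (Nf o) n) eqn:E; auto.
    assert (Hz := sumR_nonneg_zero Om (fun o => if Nat.eqb (Nf o) n then w o else 0)).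
    specialize (Hz ltac:(intros x _; cbv beta; destruct (Nat.eqb (Nf x) n); [apply Hw|lra]) (eq_sym H0) o Ho). cbv beta in Hz. rewrite E in Hz.
    cbv beta iota in Hz. rewrite Hz. ring.
Qed.

Lemma J_bound C2 : is_binary_capacity d C2 ->
  Lf Om w [Rr; Yk_rv k; NR] + Lf Om w [NR] - Lf Om w [Rr; NR] - Lf Om w [Yk_rv k; NR]
  <= expected_Nk K N d P k * C2 + ln (INR N + 1).
Proof. intros Hcap. rewrite <- (sum4 Om w Hw). rewrite split_n.
  assert (E1 : expected_Nk K N d P k = sumR (seq 0 (S N)) (fun n => pn n * INR n)).
  { unfold expected_Nk. fold Om w. rewrite split_n. apply sumR_ext. intros n _. unfold pn.
    rewrite <- sumR_scal_r. apply sumR_ext. intros o _. unfold Nf. destruct (Nat.eqb (length (sub k (fst o))) n) eqn:E.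
    apply Nat.eqb_eq in E. rewrite E. reflexivity. ring. }
  assert (E2 : sumR (seq 0 (S N)) pn = 1).
  { rewrite <- Hs. rewrite (split_n w). reflexivity. }
  rewrite E1. rewrite <- sumR_scal_r. replace (ln (INR N + 1)) with (sumR (seq 0 (S N)) pn * ln (INR N + 1)) by (rewrite E2; ring).
  rewrite <- sumR_scal_r. rewrite <- sumR_plus. apply sumR_le. intros n Hn. apply in_seq in Hn.
  apply Tn_bound; auto. lia.
Qed.

Lemma map_eq_in {A B} (f g : A -> B) l : map f l = map g l -> forall a, In a l -> f a = g a.
Proof. induction l; simpl; intros H a0 Ha; [destruct Ha|]. injection H; intros.
  destruct Ha as [<-|Ha]; auto. Qed.

Lemma Xd_eqb o o' : In o Om -> In o' Om -> rv_eqb (Xdec_rv K o') (Xdec_rv K o) = rv_eqb (X_rv o') (X_rv o).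
Proof. destruct o as [x m], o' as [x' m']. intros Ho Ho'.
  assert (Hx : In x W) by (apply In_outcomes in Ho; tauto).
  assert (Hx' : In x' W) by (apply In_outcomes in Ho'; tauto).
  apply eq_iff_eq_true. rewrite !rv_eqb_true. unfold Xdec_rv, X_rv; simpl. split.
  - intros E. apply app_inj_len in E as [E1 E2]; [|rewrite !length_map; reflexivity].
    injection E2 as E2. f_equal. apply (recon K).
    + intros s Hs. apply alphabet_label. apply In_all_words in Hx' as [_ Hx']. auto.
    + auto.
    + intros j Hj. apply (map_eq_in _ _ _ E1). apply in_seq; lia.
  - intros E; injection E as E; subst; reflexivity. Qed.

Lemma NR_of_R o o' : rv_eqb (Rr o') (Rr o) = true -> rv_eqb (NR o') (NR o) = true.
Proof. rewrite !rv_eqb_true. unfold Rr, NR. intros E; injection E as E. rewrite E; reflexivity. Qed.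

Theorem main_bound C2 : is_binary_capacity d C2 ->
  cmi Om w (Xdec_rv K) (Yk_rv k) (Yprefix_rv k) <= expected_Nk K N d P k * C2 + 2 * ln (INR N + 1).
Proof. intros Hcap.
  rewrite (cmi_L Om w Hw).
  assert (A1 : Lf Om w [Xdec_rv K; Yk_rv k; Yprefix_rv k] = Lf Om w [X_rv; Yk_rv k; Yprefix_rv k]).
  { apply Lf_ext. intros o o' Ho Ho'. rewrite !ef_cons, Xd_eqb by auto. reflexivity. }
  assert (A2 : Lf Om w [Xdec_rv K; Yprefix_rv k] = Lf Om w [X_rv; Yprefix_rv k]).
  { apply Lf_ext. intros o o' Ho Ho'. rewrite !ef_cons, Xd_eqb by auto. reflexivity. }
  pose proof Markov as HM.
  pose proof (GI1 Om w Hw [Yk_rv k] [Yprefix_rv k] []) as HG. simpl app in HG.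
  rewrite (Lf_nil Om w Hs) in HG.
  pose proof Rswap as HR.
  assert (E1 : Lf Om w [Rr; Yk_rv k] = Lf Om w [Rr; Yk_rv k; NR]).
  { apply Lf_ext. intros o o' _ _. efb. destruct (rv_eqb (Rr o') (Rr o)) eqn:E; [|reflexivity].
    rewrite (NR_of_R o o' E), andb_true_r. reflexivity. }
  assert (E2 : Lf Om w [Rr] = Lf Om w [Rr; NR]).
  { apply Lf_ext. intros o o' _ _. efb. destruct (rv_eqb (Rr o') (Rr o)) eqn:E; [|reflexivity].
    rewrite (NR_of_R o o' E). reflexivity. }
  assert (Mo : Lf Om w [Yk_rv k; NR] <= Lf Om w [Yk_rv k]).
  { apply Lf_mono. apply Hw. intros o o' _ _. efb. intros H; apply andb_prop in H; tauto. }
  assert (G := GI2 Om w Hw NR [] (map (fun j => [repeat 0%nat j]) (seq 0 (S N))) Hs).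
  rewrite length_map, length_seq, S_INR, (Lf_nil Om w Hs) in G.
  assert (G' : 0 - Lf Om w [NR] <= ln (INR N + 1)).
  { apply G. intros o Ho. apply in_map_iff. exists (Nf o). split; [reflexivity|].
    apply in_seq. pose proof (Nf_le o Ho). lia. }
  pose proof (J_bound C2 Hcap) as HJ.
  lra.
Qed.

End Main.

Theorem lemma1 (K N : nat) (d : R) (P : list nat -> R) (k : nat) (C2 : R) :
  (1 <= K)%nat -> (1 <= N)%nat -> 0 <= d <= 1 ->
  is_input_dist K N P ->
  (1 <= k <= K)%nat ->
  is_binary_capacity d C2 ->
  cmi (outcomes K N) (weight d P) (Xdec_rv K) (Yk_rv k) (Yprefix_rv k)
    <= expected_Nk K N d P k * C2 + 2 * ln (INR N + 1).
Proof. intros HK HN Hd HP Hk Hcap. eapply main_bound; eauto. Qed.
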